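(* Let $U\subset\mathbb S^2$ be open, let $(F^{ij})$ be a symmetric $2$-tensor field in $C^1(U)$ satisfying $\lambda|\xi|^2\le F^{ij}\xi_i\xi_j\le\Lambda|\xi|^2$ on $U$ for constants $\Lambda\ge\lambda>0$, and let $u\in C^3(U)$ satisfy $F^{ij}(u_{ij}+u\delta_{ij})=0$ in $U$. Then there are constants $C_1,C_2$ depending only on the $C^1$-norm of $F^{ij}$ (and on $\lambda,\Lambda$) such that, for every unit vector $E\in\mathbb R^3$, $$F^{ij}(\rho_u)_{ij}\ge-C_1|\nabla\rho_u|,\qquad F^{ij}(\phi_E)_{ij}\ge-C_2|\nabla\phi_E|\quad\text{in }U.$$
   Context: For $u\in C^1(\mathbb S^2)$ and a local orthonormal frame $e_1,e_2$ on $\mathbb S^2$, define the vector field $X_u(x)=\sum_{i=1}^2u_i(x)e_i+u(x)\,x\in\mathbb R^3$ (here $x$ is the position vector, i.e. the unit normal of $\mathbb S^2$ at $x$). For a unit vector $E\in\mathbb R^3$ set $\phi_E(x)=\langle E,X_u(x)\rangle$ and $\rho_u(x)=|X_u(x)|^2$, with $\langle\cdot,\cdot\rangle$ the Euclidean inner product. Subscripts denote covariant derivatives on $\mathbb S^2$. *)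

(* Defs.v *)
From Stdlib Require Import Reals Lra.
Open Scope R_scope.

Definition R3 := (R * R * R)%type.
Definition mk3 (a b c : R) : R3 := (a, b, c).
Definition cf (p : R3) (i : nat) : R :=
  match i with 0 => fst (fst p) | 1 => snd (fst p) | _ => snd p end.
Definition sum3 (f : nat -> R) : R := f 0%nat + f 1%nat + f 2%nat.
Definition vadd (p q : R3) : R3 := mk3 (cf p 0 + cf q 0) (cf p 1 + cf q 1) (cf p 2 + cf q 2).
Definition vscal (t : R) (p : R3) : R3 := mk3 (t * cf p 0) (t * cf p 1) (t * cf p 2).
Definition vsub (p q : R3) : R3 := vadd p (vscal (-1) q).
Definition dot (p q : R3) : R := sum3 (fun i => cf p i * cf q i).
Definition norm3 (p : R3) : R := sqrt (dot p p).
Definition ebase (i : nat) : R3 :=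
  match i with 0 => mk3 1 0 0 | 1 => mk3 0 1 0 | _ => mk3 0 0 1 end.

Definition S2open (U : R3 -> Prop) : Prop :=
  (forall x, U x -> norm3 x = 1) /\
  (forall x, U x -> exists d, 0 < d /\
     forall y, norm3 y = 1 -> norm3 (vsub y x) < d -> U y).

Definition cone (U : R3 -> Prop) (y : R3) : Prop :=
  y <> mk3 0 0 0 /\ U (vscal (/ norm3 y) y).

(* 0-homogeneous extension of a function on S^2 (only values on S^2 matter). *)
Definition ext0 (f : R3 -> R) (y : R3) : R := f (vscal (/ norm3 y) y).

Definition is_partial (f : R3 -> R) (i : nat) (g : R3 -> R) (V : R3 -> Prop) : Prop :=
  forall x, V x -> derivable_pt_lim (fun t => f (vadd x (vscal t (ebase i)))) 0 (g x).

Definition cont3 (f : R3 -> R) (V : R3 -> Prop) : Prop :=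
  forall x, V x -> forall eps, 0 < eps -> exists d, 0 < d /\
    forall y, V y -> norm3 (vsub y x) < d -> Rabs (f y - f x) < eps.

Definition grad (D : nat -> R3 -> R) (x : R3) : R3 := mk3 (D 0%nat x) (D 1%nat x) (D 2%nat x).

(* X_u = sum_i u_i e_i + u x ; Du = ambient gradient of the 0-homogeneous
   extension of u, which on S^2 is the spherical gradient. *)
Definition Xu (u : R3 -> R) (Du : nat -> R3 -> R) (x : R3) : R3 :=
  vadd (grad Du x) (vscal (u x) x).
Definition rho_u (u : R3 -> R) (Du : nat -> R3 -> R) (x : R3) : R :=
  dot (Xu u Du x) (Xu u Du x).
Definition phi_E (E : R3) (u : R3 -> R) (Du : nat -> R3 -> R) (x : R3) : R :=
  dot E (Xu u Du x).

(* Contraction F^{ij} A_{ij} with F stored as a tangential symmetric 3x3 matrix. *)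
Definition contr (F : nat -> nat -> R3 -> R) (A : nat -> nat -> R3 -> R) (x : R3) : R :=
  sum3 (fun a => sum3 (fun b => F a b x * A a b x)).
Definition quadF (F : nat -> nat -> R3 -> R) (x xi : R3) : R :=
  sum3 (fun a => sum3 (fun b => F a b x * cf xi a * cf xi b)).

(* Main.v *)
Require Import Defs.
From Stdlib Require Import Reals Lra Lia Psatz.
Open Scope R_scope.

Lemma dplus f g x a b : derivable_pt_lim f x a -> derivable_pt_lim g x b ->
  derivable_pt_lim (fun t => f t + g t) x (a+b).
Proof. intros; apply (derivable_pt_lim_plus f g); auto. Qed.
Lemma dminus f g x a b : derivable_pt_lim f x a -> derivable_pt_lim g x b ->
  derivable_pt_lim (fun t => f t - g t) x (a-b).
Proof. intros; apply (derivable_pt_lim_minus f g); auto. Qed.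
Lemma dmult f g x a b : derivable_pt_lim f x a -> derivable_pt_lim g x b ->
  derivable_pt_lim (fun t => f t * g t) x (a * g x + f x * b).
Proof. intros. replace (a * g x + f x * b) with (a * g x + f x * b) by ring.
  apply (derivable_pt_lim_mult f g); auto. Qed.
Lemma dconst c x : derivable_pt_lim (fun _ => c) x 0.
Proof. apply (derivable_pt_lim_const c). Qed.
Lemma did x : derivable_pt_lim (fun t => t) x 1.
Proof. apply derivable_pt_lim_id. Qed.
Lemma dopp f x a : derivable_pt_lim f x a -> derivable_pt_lim (fun t => - f t) x (-a).
Proof. intros; apply (derivable_pt_lim_opp f); auto. Qed.
Lemma dreplace f x l l' : derivable_pt_lim f x l -> l = l' -> derivable_pt_lim f x l'.
Proof. intros H ->; auto. Qed.
Lemma dloc f g x l d : 0 < d -> (forall t, Rabs (t - x) < d -> f t = g t) ->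
  derivable_pt_lim f x l -> derivable_pt_lim g x l.
Proof.
  intros Hd E H eps Heps. destruct (H eps Heps) as [del Hdel].
  assert (Hm: 0 < Rmin del d) by (apply Rmin_pos; [apply cond_pos|lra]).
  exists (mkposreal _ Hm). intros h Hh Hlt. simpl in Hlt.
  rewrite <- (E (x+h)), <- (E x).
  - apply Hdel; auto. apply Rlt_le_trans with (1:=Hlt); apply Rmin_l.
  - rewrite Rminus_diag, Rabs_R0; lra.
  - replace (x+h-x) with h by ring. apply Rlt_le_trans with (1:=Hlt); apply Rmin_r.
Qed.

Ltac dsolve := repeat first
  [ apply dplus | apply dminus | apply dmult | apply dopp | apply did | apply dconst | eassumption ].

Ltac unf := unfold norm3, dot, sum3, vsub, vadd, vscal, mk3, cf in *; simpl in *.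

Lemma dot_ge0 y : 0 <= dot y y.
Proof. destruct y as [[a b] c]; unf; nra. Qed.

Lemma dot_pos y : y <> mk3 0 0 0 -> 0 < dot y y.
Proof. destruct y as [[a b] c]; unf; intros H.
  destruct (Req_dec a 0); destruct (Req_dec b 0); destruct (Req_dec c 0); subst;
  try (exfalso; apply H; reflexivity); nra. Qed.

Lemma norm3_pos y : y <> mk3 0 0 0 -> 0 < norm3 y.
Proof. intros H; unfold norm3; apply sqrt_lt_R0, dot_pos, H. Qed.

Lemma norm3_ge0 y : 0 <= norm3 y.
Proof. unfold norm3; apply sqrt_pos. Qed.

Lemma norm3_sq y : norm3 y * norm3 y = dot y y.
Proof. unfold norm3; apply sqrt_sqrt, dot_ge0. Qed.

Lemma norm3_scal s y : 0 <= s -> norm3 (vscal s y) = s * norm3 y.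
Proof. intros Hs. unfold norm3.
  replace (dot (vscal s y) (vscal s y)) with ((s*s) * dot y y)
    by (destruct y as [[a b] c]; unf; ring).
  rewrite sqrt_mult_alt by nra. rewrite sqrt_square by lra. reflexivity. Qed.

Lemma vscal_vscal s t y : vscal s (vscal t y) = vscal (s*t) y.
Proof. destruct y as [[a b] c]; unf; f_equal; [f_equal|]; ring. Qed.

Lemma vscal1 y : vscal 1 y = y.
Proof. destruct y as [[a b] c]; unf; f_equal; [f_equal|]; ring. Qed.

Lemma norm_normalize y : y <> mk3 0 0 0 -> norm3 (vscal (/ norm3 y) y) = 1.
Proof. intros H. pose proof (norm3_pos y H).
  rewrite norm3_scal by (left; apply Rinv_0_lt_compat; lra). field. lra. Qed.

Lemma normalize_scal s y : 0 < s -> y <> mk3 0 0 0 ->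
  vscal (/ norm3 (vscal s y)) (vscal s y) = vscal (/ norm3 y) y.
Proof. intros Hs H. pose proof (norm3_pos y H).
  rewrite norm3_scal by lra. rewrite vscal_vscal. f_equal. field. lra. Qed.

Lemma scal_nz s y : 0 < s -> y <> mk3 0 0 0 -> vscal s y <> mk3 0 0 0.
Proof. intros Hs H E. apply H. destruct y as [[a b] c]; unf.
  injection E; intros E3 E2 E1.
  assert (a = 0) by (apply (Rmult_eq_reg_l s); lra).
  assert (b = 0) by (apply (Rmult_eq_reg_l s); lra).
  assert (c = 0) by (apply (Rmult_eq_reg_l s); lra). subst; reflexivity. Qed.

Lemma ext0_scal f s y : 0 < s -> y <> mk3 0 0 0 -> ext0 f (vscal s y) = ext0 f y.
Proof. intros. unfold ext0. rewrite normalize_scal; auto. Qed.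

Lemma ext0_unit f y : norm3 y = 1 -> ext0 f y = f y.
Proof. intros H; unfold ext0; rewrite H, Rinv_1, vscal1; auto. Qed.

Lemma cone_scal U s y : 0 < s -> cone U y -> cone U (vscal s y).
Proof. intros Hs [H1 H2]; split. apply scal_nz; auto. rewrite normalize_scal; auto. Qed.

Lemma unit_nz y : norm3 y = 1 -> y <> mk3 0 0 0.
Proof. intros H E; subst; unf. replace (0*0+0*0+0*0) with 0 in H by ring. rewrite sqrt_0 in H. lra. Qed.

Lemma cone_unit U x : S2open U -> U x -> cone U x.
Proof. intros [H1 _] Hx. split. apply unit_nz; auto.
  rewrite (H1 x Hx), Rinv_1, vscal1; auto. Qed.

Lemma cs y z : dot y z <= norm3 y * norm3 z.
Proof.
  assert (L: dot y z * dot y z <= dot y y * dot z z)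
    by (destruct y as [[a b] c]; destruct z as [[d e] f]; unf;
        pose proof (Rle_0_sqr (a*e-b*d)); pose proof (Rle_0_sqr (a*f-c*d));
        pose proof (Rle_0_sqr (b*f-c*e)); unfold Rsqr in *; nra).
  destruct (Rle_or_lt (dot y z) 0).
  - pose proof (norm3_ge0 y); pose proof (norm3_ge0 z); nra.
  - rewrite <- (norm3_sq y), <- (norm3_sq z) in L.
    pose proof (norm3_ge0 y); pose proof (norm3_ge0 z).
    apply Rsqr_incr_0_var; [unfold Rsqr; nra | nra].
Qed.

Lemma tri y z : norm3 (vadd y z) <= norm3 y + norm3 z.
Proof.
  pose proof (norm3_ge0 y); pose proof (norm3_ge0 z); pose proof (norm3_ge0 (vadd y z)).
  assert (dot (vadd y z) (vadd y z) = dot y y + 2 * dot y z + dot z z)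
    by (destruct y as [[a b] c]; destruct z as [[d e] f]; unf; ring).
  pose proof (cs y z). rewrite <- !norm3_sq in H2. nra.
Qed.

Lemma norm_le_sum v : norm3 v <= Rabs (cf v 0) + Rabs (cf v 1) + Rabs (cf v 2).
Proof.
  pose proof (norm3_ge0 v).
  assert (E: norm3 v * norm3 v <= (Rabs (cf v 0) + Rabs (cf v 1) + Rabs (cf v 2))^2).
  { rewrite norm3_sq. destruct v as [[a b] c]; unf.
    pose proof (Rabs_pos a); pose proof (Rabs_pos b); pose proof (Rabs_pos c).
    assert (a*a = Rabs a * Rabs a) by (rewrite <- Rabs_mult; symmetry; apply Rabs_pos_eq; nra).
    assert (b*b = Rabs b * Rabs b) by (rewrite <- Rabs_mult; symmetry; apply Rabs_pos_eq; nra).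
    assert (c*c = Rabs c * Rabs c) by (rewrite <- Rabs_mult; symmetry; apply Rabs_pos_eq; nra).
    nra. }
  pose proof (Rabs_pos (cf v 0)); pose proof (Rabs_pos (cf v 1)); pose proof (Rabs_pos (cf v 2)).
  nra.
Qed.

Lemma abs_cf_le v i : Rabs (cf v i) <= norm3 v.
Proof.
  apply Rsqr_incr_0_var; [|apply norm3_ge0]. unfold Rsqr. rewrite norm3_sq.
  rewrite <- Rabs_mult. rewrite Rabs_pos_eq by nra.
  destruct v as [[a b] c]; destruct i as [|[|i]]; unf; nra.
Qed.

Lemma cf_vsub z y i : cf (vsub z y) i = cf z i - cf y i.
Proof. destruct z as [[a b] c]; destruct y as [[d e] f]; destruct i as [|[|i]]; unf; ring. Qed.
Lemma cf_vadd z y i : cf (vadd z y) i = cf z i + cf y i.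
Proof. destruct z as [[a b] c]; destruct y as [[d e] f]; destruct i as [|[|i]]; unf; ring. Qed.
Lemma cf_vscal s y i : cf (vscal s y) i = s * cf y i.
Proof. destruct y as [[d e] f]; destruct i as [|[|i]]; unf; ring. Qed.

Lemma R3_ext p q : cf p 0 = cf q 0 -> cf p 1 = cf q 1 -> cf p 2 = cf q 2 -> p = q.
Proof. destruct p as [[a b] c]; destruct q as [[d e] f]; simpl; intros; subst; auto. Qed.

Lemma norm_vsub_sym a b : norm3 (vsub a b) = norm3 (vsub b a).
Proof. destruct a as [[a1 a2] a3]; destruct b as [[b1 b2] b3]; unf.
  f_equal; ring. Qed.

Lemma rev_tri z y : Rabs (norm3 y - norm3 z) <= norm3 (vsub z y).
Proof.
  assert (E1: y = vadd z (vsub y z)) by (apply R3_ext; rewrite cf_vadd, cf_vsub; ring).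
  assert (E2: z = vadd y (vsub z y)) by (apply R3_ext; rewrite cf_vadd, cf_vsub; ring).
  pose proof (tri z (vsub y z)); pose proof (tri y (vsub z y)).
  rewrite <- E1 in H; rewrite <- E2 in H0. rewrite norm_vsub_sym in H.
  apply Rabs_le; lra.
Qed.

Lemma abs_le_inv x a : Rabs x <= a -> -a <= x <= a.
Proof. unfold Rabs; destruct (Rcase_abs x); lra. Qed.

Lemma norm3_scal_abs s y : norm3 (vscal s y) = Rabs s * norm3 y.
Proof. unfold norm3.
  replace (dot (vscal s y) (vscal s y)) with ((s*s) * dot y y)
    by (destruct y as [[a b] c]; unf; ring).
  rewrite sqrt_mult_alt by nra. rewrite <- (sqrt_Rsqr_abs s). reflexivity. Qed.

Lemma cone_open U y : S2open U -> cone U y ->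
  exists del, 0 < del /\ forall z, norm3 (vsub z y) < del -> cone U z.
Proof.
  intros HU [Hy0 Hy]. pose proof (norm3_pos y Hy0) as HN. set (N := norm3 y) in *.
  destruct HU as [HU1 HU2]. destruct (HU2 _ Hy) as [d [Hd Hd2]].
  exists (Rmin (N/2) (d*N/4)). split. apply Rmin_pos; nra.
  intros z Hz. pose proof (Rmin_l (N/2) (d*N/4)); pose proof (Rmin_r (N/2) (d*N/4)).
  pose proof (rev_tri z y). fold N in H1. apply abs_le_inv in H1.
  assert (Hzp: N/2 < norm3 z) by lra.
  assert (Hz0: z <> mk3 0 0 0).
  { intro E; subst. unf. replace (0*0+0*0+0*0) with 0 in Hzp by ring. rewrite sqrt_0 in Hzp. lra. }
  split; auto. apply Hd2. apply norm_normalize; auto.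
  set (M := norm3 z) in *.
  assert (E: vsub (vscal (/M) z) (vscal (/N) y) = vadd (vscal (/M) (vsub z y)) (vscal (/M - /N) y))
    by (apply R3_ext; rewrite ?cf_vadd, ?cf_vsub, ?cf_vscal, ?cf_vsub; ring).
  rewrite E. eapply Rle_lt_trans. apply tri.
  rewrite !norm3_scal_abs. fold N.
  rewrite (Rabs_pos_eq (/M)) by (left; apply Rinv_0_lt_compat; lra).
  replace (/M - /N) with ((N - M) / (M*N)) by (field; lra).
  unfold Rdiv; rewrite Rabs_mult, Rabs_inv, (Rabs_pos_eq (M*N)) by nra.
  assert (Rabs (N - M) <= norm3 (vsub z y)) by (apply Rabs_le; lra).
  pose proof (Rabs_pos (N-M)).
  apply Rle_lt_trans with (2 * norm3 (vsub z y) / M).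
  { unfold Rdiv. replace (Rabs (N - M) * / (M * N) * N) with (Rabs (N-M) * /M) by (field; lra).
    assert (0 < /M) by (apply Rinv_0_lt_compat; lra). nra. }
  apply Rmult_lt_reg_r with M; [lra|]. unfold Rdiv. rewrite Rmult_assoc, Rinv_l by lra.
  nra.
Qed.

Lemma box_norm z y del : 0 < del -> (forall i, (i < 3)%nat -> Rabs (cf z i - cf y i) < del/3) ->
  norm3 (vsub z y) < del.
Proof. intros Hd H. eapply Rle_lt_trans. apply norm_le_sum. rewrite !cf_vsub.
  pose proof (H 0%nat ltac:(lia)); pose proof (H 1%nat ltac:(lia)); pose proof (H 2%nat ltac:(lia)). lra. Qed.

Definition line (y : R3) (i : nat) (t : R) := vadd y (vscal t (ebase i)).

Lemma line_line y i s t : line (line y i s) i t = line y i (s + t).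
Proof. unfold line; apply R3_ext; repeat rewrite ?cf_vadd, ?cf_vscal; ring. Qed.

Lemma line0 y i : line y i 0 = y.
Proof. unfold line; apply R3_ext; repeat rewrite ?cf_vadd, ?cf_vscal; ring. Qed.

Lemma cf_ebase_le i j : Rabs (cf (ebase i) j) <= 1.
Proof. destruct i as [|[|i]]; destruct j as [|[|j]]; simpl; rewrite ?Rabs_R0, ?Rabs_R1; lra. Qed.

Lemma norm_line y i t : norm3 (vsub (line y i t) y) <= 3 * Rabs t.
Proof. eapply Rle_trans. apply norm_le_sum. unfold line. rewrite !cf_vsub, !cf_vadd, !cf_vscal.
  replace (cf y 0 + t * cf (ebase i) 0 - cf y 0) with (t * cf (ebase i) 0) by ring.
  replace (cf y 1 + t * cf (ebase i) 1 - cf y 1) with (t * cf (ebase i) 1) by ring.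
  replace (cf y 2 + t * cf (ebase i) 2 - cf y 2) with (t * cf (ebase i) 2) by ring.
  rewrite !Rabs_mult. pose proof (cf_ebase_le i 0); pose proof (cf_ebase_le i 1);
  pose proof (cf_ebase_le i 2); pose proof (Rabs_pos t). nra. Qed.

Lemma line_in U y i : S2open U -> cone U y ->
  exists del, 0 < del /\ forall t, Rabs t < del -> cone U (line y i t).
Proof. intros HU Hy. destruct (cone_open U y HU Hy) as [d [Hd H]].
  exists (d/3); split; [lra|]. intros t Ht. apply H.
  eapply Rle_lt_trans. apply norm_line. lra. Qed.

Lemma partial_shift f i Df V y s : is_partial f i Df V -> V (line y i s) ->
  derivable_pt_lim (fun t => f (line y i t)) s (Df (line y i s)).
Proof.
  intros H Hv eps Heps. destruct (H _ Hv eps Heps) as [del Hdel].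
  exists del. intros h Hh Hlt. specialize (Hdel h Hh Hlt).
  fold (line (line y i s) i (0+h)) in Hdel. fold (line (line y i s) i 0) in Hdel.
  rewrite !line_line in Hdel. rewrite Rplus_0_r, Rplus_0_l in Hdel. exact Hdel.
Qed.

Lemma mvt_gen g g' a b : (forall c, Rmin a b <= c <= Rmax a b -> derivable_pt_lim g c (g' c)) ->
  exists c, Rmin a b <= c <= Rmax a b /\ g b - g a = g' c * (b - a).
Proof.
  intros H. destruct (Rtotal_order a b) as [Hab|[Hab|Hab]].
  - destruct (MVT_cor2 g g' a b Hab) as [c [E Hc]].
    + intros c Hc; apply H. rewrite Rmin_left, Rmax_right by lra; lra.
    + exists c. rewrite Rmin_left, Rmax_right by lra. split; [lra|auto].
  - subst. exists b. rewrite Rmin_left, Rmax_left by lra. split; [lra|ring].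
  - destruct (MVT_cor2 g g' b a Hab) as [c [E Hc]].
    + intros c Hc; apply H. rewrite Rmin_right, Rmax_left by lra; lra.
    + exists c. rewrite Rmin_right, Rmax_left by lra. split; [lra|]. lra.
Qed.

Lemma close_norm xi y r : (forall i, (i < 3)%nat -> Rabs (cf xi i - cf y i) <= r) ->
  norm3 (vsub xi y) <= 3 * r.
Proof. intros H. eapply Rle_trans. apply norm_le_sum. rewrite !cf_vsub.
  pose proof (H 0%nat ltac:(lia)); pose proof (H 1%nat ltac:(lia)); pose proof (H 2%nat ltac:(lia)). lra. Qed.

Lemma mvt_step f Dk k V P a : is_partial f k Dk V ->
  (forall s, Rmin 0 a <= s <= Rmax 0 a -> V (line P k s)) ->
  exists c, Rmin 0 a <= c <= Rmax 0 a /\ f (line P k a) - f P = Dk (line P k c) * a.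
Proof.
  intros H Hv. destruct (mvt_gen (fun s => f (line P k s)) (fun s => Dk (line P k s)) 0 a) as [c [Hc E]].
  - intros c Hc. eapply partial_shift; [exact H| auto].
  - exists c; split; auto. rewrite line0 in E. rewrite E; ring.
Qed.

Lemma between_abs c a : Rmin 0 a <= c <= Rmax 0 a -> Rabs c <= Rabs a.
Proof. intros [H1 H2]. unfold Rmin, Rmax in *. destruct (Rle_dec 0 a);
  unfold Rabs; destruct (Rcase_abs c); destruct (Rcase_abs a); lra. Qed.

Ltac fin Hk h := first [apply Hk | eapply Rle_trans; [eassumption|apply Hk] | (rewrite Rabs_R0; pose proof (Rabs_pos h); pose proof (Hk 0%nat); pose proof (Rabs_pos (h * cf _ 0)); lra)].

Ltac fin2 Hk h H HDd i :=
  pose proof (abs_le_inv _ _ (Hk 0%nat)); pose proof (abs_le_inv _ _ (Hk 1%nat));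
  pose proof (abs_le_inv _ _ (Hk 2%nat)); pose proof (abs_le_inv _ _ H);
  pose proof (Rmult_le_pos _ _ (Rabs_pos h) HDd); pose proof (Hk 0%nat); pose proof (Hk 1%nat); pose proof (Hk 2%nat);
  destruct i as [|[|[|i]]]; try lia; cbn [cf ebase] in *; unfold mk3 in *; cbn [fst snd] in *; apply Rabs_le; lra.

Lemma dir_deriv U f Df y d : S2open U -> cone U y ->
  (forall k, (k < 3)%nat -> is_partial f k (Df k) (cone U)) ->
  (forall k, (k < 3)%nat -> cont3 (Df k) (cone U)) ->
  derivable_pt_lim (fun t => f (vadd y (vscal t d))) 0 (sum3 (fun k => cf d k * Df k y)).
Proof.
  intros HU Hy Hp Hc eps Heps.
  set (Dd := Rabs (cf d 0) + Rabs (cf d 1) + Rabs (cf d 2)).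
  assert (HDd: 0 <= Dd) by (unfold Dd; pose proof (Rabs_pos (cf d 0)); pose proof (Rabs_pos (cf d 1)); pose proof (Rabs_pos (cf d 2)); lra).
  set (e' := eps / (Dd + 1)).
  assert (He': 0 < e') by (unfold e'; apply Rdiv_lt_0_compat; lra).
  destruct (Hc 0%nat ltac:(lia) y Hy e' He') as [d0 [Hd0 C0]].
  destruct (Hc 1%nat ltac:(lia) y Hy e' He') as [d1 [Hd1 C1]].
  destruct (Hc 2%nat ltac:(lia) y Hy e' He') as [d2 [Hd2 C2]].
  destruct (cone_open U y HU Hy) as [dl [Hdl Cl]].
  set (m := Rmin (Rmin dl d0) (Rmin d1 d2)).
  assert (Hm: 0 < m) by (unfold m; repeat apply Rmin_pos; auto).
  assert (Hm1: m <= dl /\ m <= d0 /\ m <= d1 /\ m <= d2).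
  { unfold m. pose proof (Rmin_l (Rmin dl d0) (Rmin d1 d2)); pose proof (Rmin_r (Rmin dl d0) (Rmin d1 d2)).
    pose proof (Rmin_l dl d0); pose proof (Rmin_r dl d0); pose proof (Rmin_l d1 d2); pose proof (Rmin_r d1 d2). lra. }
  assert (Hdel: 0 < m / (3 * (Dd + 1))) by (apply Rdiv_lt_0_compat; lra).
  exists (mkposreal _ Hdel). intros h Hh Hlt. simpl in Hlt.
  assert (Hr: 3 * (Rabs h * Dd) < m).
  { apply Rmult_lt_compat_r with (r := 3 * (Dd+1)) in Hlt; [|lra].
    unfold Rdiv in Hlt. rewrite Rmult_assoc, Rinv_l, Rmult_1_r in Hlt by lra.
    pose proof (Rabs_pos h). nra. }
  assert (Near: forall xi, (forall i, (i < 3)%nat -> Rabs (cf xi i - cf y i) <= Rabs h * Dd) ->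
            cone U xi /\ norm3 (vsub xi y) < m).
  { intros xi Hxi. pose proof (close_norm xi y _ Hxi). split; [apply Cl|]; lra. }
  assert (Hk: forall k, Rabs (h * cf d k) <= Rabs h * Dd).
  { intros k. rewrite Rabs_mult. apply Rmult_le_compat_l. apply Rabs_pos.
    unfold Dd. pose proof (Rabs_pos (cf d 0)); pose proof (Rabs_pos (cf d 1)); pose proof (Rabs_pos (cf d 2)).
    destruct k as [|[|k]]; cbn [cf] in *; lra. }
  set (P1 := mk3 (cf y 0) (cf y 1) (cf y 2 + h * cf d 2)).
  set (P0 := mk3 (cf y 0) (cf y 1 + h * cf d 1) (cf y 2 + h * cf d 2)).
  assert (E0: vadd y (vscal h d) = line P0 0 (h * cf d 0))
    by (apply R3_ext; unfold line, P0; repeat rewrite ?cf_vadd, ?cf_vscal; simpl; ring).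
  assert (E1: P0 = line P1 1 (h * cf d 1))
    by (apply R3_ext; unfold line, P0, P1; repeat rewrite ?cf_vadd, ?cf_vscal; simpl; ring).
  assert (E2: P1 = line y 2 (h * cf d 2))
    by (apply R3_ext; unfold line, P1; repeat rewrite ?cf_vadd, ?cf_vscal; simpl; ring).
  assert (Ey: vadd y (vscal 0 d) = y)
    by (apply R3_ext; repeat rewrite ?cf_vadd, ?cf_vscal; ring).
  assert (N0: forall s, Rmin 0 (h * cf d 0) <= s <= Rmax 0 (h * cf d 0) ->
     cone U (line P0 0 s) /\ norm3 (vsub (line P0 0 s) y) < m).
  { intros s Hs. apply Near. pose proof (between_abs _ _ Hs). intros i Hi.
    unfold line, P0; repeat rewrite ?cf_vadd, ?cf_vscal.
    fin2 Hk h H HDd i. }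
  assert (N1: forall s, Rmin 0 (h * cf d 1) <= s <= Rmax 0 (h * cf d 1) ->
     cone U (line P1 1 s) /\ norm3 (vsub (line P1 1 s) y) < m).
  { intros s Hs. apply Near. pose proof (between_abs _ _ Hs). intros i Hi.
    unfold line, P1; repeat rewrite ?cf_vadd, ?cf_vscal.
    fin2 Hk h H HDd i. }
  assert (N2: forall s, Rmin 0 (h * cf d 2) <= s <= Rmax 0 (h * cf d 2) ->
     cone U (line y 2 s) /\ norm3 (vsub (line y 2 s) y) < m).
  { intros s Hs. apply Near. pose proof (between_abs _ _ Hs). intros i Hi.
    unfold line; repeat rewrite ?cf_vadd, ?cf_vscal.
    fin2 Hk h H HDd i. }
  destruct (mvt_step f (Df 0%nat) 0 (cone U) P0 (h * cf d 0) (Hp 0%nat ltac:(lia))) as [c0 [Hc0 T0]].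
  { intros s Hs. apply N0; auto. }
  destruct (mvt_step f (Df 1%nat) 1 (cone U) P1 (h * cf d 1) (Hp 1%nat ltac:(lia))) as [c1 [Hc1 T1]].
  { intros s Hs. apply N1; auto. }
  destruct (mvt_step f (Df 2%nat) 2 (cone U) y (h * cf d 2) (Hp 2%nat ltac:(lia))) as [c2 [Hc2 T2]].
  { intros s Hs. apply N2; auto. }
  rewrite Rplus_0_l, E0, Ey.
  assert (F0: f P0 = f (line P1 1 (h * cf d 1))) by (f_equal; exact E1).
  assert (F1: f P1 = f (line y 2 (h * cf d 2))) by (f_equal; exact E2).
  destruct (N0 c0 Hc0) as [V0 M0]. destruct (N1 c1 Hc1) as [V1 M1]. destruct (N2 c2 Hc2) as [V2 M2].
  pose proof (C0 _ V0 ltac:(lra)) as B0. pose proof (C1 _ V1 ltac:(lra)) as B1.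
  pose proof (C2 _ V2 ltac:(lra)) as B2.
  replace ((f (line P0 0 (h * cf d 0)) - f y) / h - sum3 (fun k => cf d k * Df k y))
    with (cf d 0 * (Df 0%nat (line P0 0 c0) - Df 0%nat y) + cf d 1 * (Df 1%nat (line P1 1 c1) - Df 1%nat y)
          + cf d 2 * (Df 2%nat (line y 2 c2) - Df 2%nat y)).
  2:{ assert (Tot: f (line P0 0 (h * cf d 0)) - f y = Df 0%nat (line P0 0 c0) * (h * cf d 0)
          + Df 1%nat (line P1 1 c1) * (h * cf d 1) + Df 2%nat (line y 2 c2) * (h * cf d 2)) by lra.
      rewrite Tot. unfold sum3. field. auto. }
  eapply Rle_lt_trans. apply Rabs_triang. eapply Rle_lt_trans. apply Rplus_le_compat_r, Rabs_triang.
  rewrite !Rabs_mult.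
  pose proof (Rabs_pos (cf d 0)); pose proof (Rabs_pos (cf d 1)); pose proof (Rabs_pos (cf d 2)).
  assert (Dd * e' < eps).
  { unfold e'. apply Rmult_lt_reg_r with (Dd+1); [lra|]. unfold Rdiv.
    replace (Dd * (eps * / (Dd + 1)) * (Dd + 1)) with (Dd * eps) by (field; lra). nra. }
  unfold Dd in *. nra.
Qed.

Lemma line_comm y k l a b : line (line y k a) l b = line (line y l b) k a.
Proof. unfold line; apply R3_ext; repeat rewrite ?cf_vadd, ?cf_vscal; ring. Qed.

Lemma norm_line2 y k l a b : norm3 (vsub (line (line y k a) l b) y) <= 3 * Rabs a + 3 * Rabs b.
Proof.
  set (q := line y k a).
  assert (E: vsub (line q l b) y = vadd (vsub (line q l b) q) (vsub q y))
    by (apply R3_ext; repeat rewrite ?cf_vadd, ?cf_vsub; ring).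
  rewrite E. eapply Rle_trans. apply tri. pose proof (norm_line q l b); pose proof (norm_line y k a).
  fold q in H0. lra.
Qed.

Lemma half f Dk Dkl V k l y s : 0 < s ->
  is_partial f k Dk V -> is_partial Dk l Dkl V ->
  (forall a b, 0 <= a <= s -> 0 <= b <= s -> V (line (line y k a) l b)) ->
  exists a b, 0 <= a <= s /\ 0 <= b <= s /\
   f (line (line y k s) l s) - f (line y k s) - f (line y l s) + f y = s * s * Dkl (line (line y k a) l b).
Proof.
  intros Hs Hk Hkl Hv.
  assert (Hmin: Rmin 0 s = 0) by (apply Rmin_left; lra).
  assert (Hmax: Rmax 0 s = s) by (apply Rmax_right; lra).
  destruct (mvt_gen (fun a => f (line (line y l s) k a) - f (line y k a))
              (fun a => Dk (line (line y l s) k a) - Dk (line y k a)) 0 s) as [c [Hc E1]].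
  { intros c Hc. rewrite Hmin, Hmax in Hc. apply dminus.
    - eapply partial_shift; [exact Hk|]. rewrite <- line_comm. apply Hv; lra.
    - eapply partial_shift; [exact Hk|]. rewrite <- (line0 (line y k c) l). apply Hv; lra. }
  rewrite Hmin, Hmax in Hc.
  destruct (mvt_gen (fun b => Dk (line (line y k c) l b)) (fun b => Dkl (line (line y k c) l b)) 0 s)
    as [b [Hb E2]].
  { intros b Hb. rewrite Hmin, Hmax in Hb. eapply partial_shift; [exact Hkl|]. apply Hv; lra. }
  rewrite Hmin, Hmax in Hb.
  exists c, b. split; [lra|]. split; [lra|].
  rewrite (line0 y k) in E1. rewrite (line0 (line y k c) l) in E2. rewrite <- (line_comm y k l c s) in E1.
  rewrite <- (line_comm y k l s s) in E1. rewrite E2 in E1. rewrite (line0 (line y l s) k) in E1. transitivity (Dkl (line (line y k c) l b) * (s - 0) * (s - 0)); [lra|ring].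
Qed.


Lemma schwarz U f Dk Dl Dkl Dlk k l y : S2open U -> cone U y ->
  is_partial f k Dk (cone U) -> is_partial f l Dl (cone U) ->
  is_partial Dk l Dkl (cone U) -> is_partial Dl k Dlk (cone U) ->
  cont3 Dkl (cone U) -> cont3 Dlk (cone U) -> Dkl y = Dlk y.
Proof.
  intros HU Hy Hk Hl Hkl Hlk C1 C2.
  destruct (Req_dec (Dkl y) (Dlk y)) as [E|NE]; auto. exfalso.
  set (eps := Rabs (Dkl y - Dlk y) / 2).
  assert (He: 0 < eps) by (unfold eps; apply Rdiv_lt_0_compat; [apply Rabs_pos_lt; lra|lra]).
  destruct (C1 y Hy eps He) as [d1 [Hd1 B1]]. destruct (C2 y Hy eps He) as [d2 [Hd2 B2]].
  destruct (cone_open U y HU Hy) as [d0 [Hd0 B0]].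
  set (m := Rmin d0 (Rmin d1 d2)).
  assert (Hm: 0 < m) by (unfold m; repeat apply Rmin_pos; auto).
  assert (Hm1: m <= d0 /\ m <= d1 /\ m <= d2).
  { unfold m. pose proof (Rmin_l d0 (Rmin d1 d2)); pose proof (Rmin_r d0 (Rmin d1 d2)).
    pose proof (Rmin_l d1 d2); pose proof (Rmin_r d1 d2). lra. }
  set (s := m / 12). assert (Hs: 0 < s) by (unfold s; lra).
  assert (Near: forall k l a b, 0 <= a <= s -> 0 <= b <= s -> norm3 (vsub (line (line y k a) l b) y) < m).
  { intros k' l' a b Ha Hb. eapply Rle_lt_trans. apply norm_line2.
    rewrite !Rabs_pos_eq by lra. unfold s in *. lra. }
  destruct (half f Dk Dkl (cone U) k l y s Hs Hk Hkl) as [a [b [Ha [Hb E1]]]].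
  { intros a b Ha Hb. apply B0. pose proof (Near k l a b Ha Hb). lra. }
  destruct (half f Dl Dlk (cone U) l k y s Hs Hl Hlk) as [a' [b' [Ha' [Hb' E2]]]].
  { intros a' b' Ha' Hb'. apply B0. pose proof (Near l k a' b' Ha' Hb'). lra. }
  rewrite (line_comm y l k s s) in E2.
  assert (EQ: Dkl (line (line y k a) l b) = Dlk (line (line y l a') k b')).
  { apply (Rmult_eq_reg_l (s*s)); [lra| intro; nra]. }
  pose proof (Near k l a b Ha Hb); pose proof (Near l k a' b' Ha' Hb').
  pose proof (B1 (line (line y k a) l b) (B0 (line (line y k a) l b) ltac:(lra)) ltac:(lra)).
  pose proof (B2 (line (line y l a') k b') (B0 (line (line y l a') k b') ltac:(lra)) ltac:(lra)).
  rewrite EQ in H1.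
  assert (Rabs (Dkl y - Dlk y) < 2 * eps).
  { replace (Dkl y - Dlk y) with ((Dlk (line (line y l a') k b') - Dlk y) - (Dlk (line (line y l a') k b') - Dkl y)) by ring.
    eapply Rle_lt_trans. apply Rabs_triang. rewrite Rabs_Ropp. lra. }
  unfold eps in H3. lra.
Qed.

Lemma dcomp_lin (g : R -> R) x a l : derivable_pt_lim g (a * x) l ->
  derivable_pt_lim (fun t => g (a * t)) x (l * a).
Proof. intros H.
  assert (H2: derivable_pt_lim (fun t => a * t) x a).
  { apply (dreplace _ _ (0 * x + a * 1)); [apply dmult; [apply dconst|apply did]|ring]. }
  exact (derivable_pt_lim_comp (fun t => a * t) g x a l H2 H). Qed.

Lemma hom_partial U f Df i m : S2open U ->
  (forall y s, cone U y -> 0 < s -> f (vscal s y) * s ^ m = f y) ->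
  is_partial f i Df (cone U) ->
  forall y s, cone U y -> 0 < s -> Df (vscal s y) * s ^ (S m) = Df y.
Proof.
  intros HU Hh Hp y s Hy Hs.
  assert (Hsy: cone U (vscal s y)) by (apply cone_scal; auto).
  assert (L1: derivable_pt_lim (fun t => f (line (vscal s y) i t) * s ^ m) 0 (Df (vscal s y) * s ^ m)).
  { apply (dreplace _ _ (Df (vscal s y) * s^m + f (line (vscal s y) i 0) * 0)); [|ring].
    apply dmult; [|apply dconst]. apply (Hp _ Hsy). }
  assert (L2: derivable_pt_lim (fun t => f (line y i (/s * t))) 0 (Df y * /s)).
  { apply (dcomp_lin (fun tau => f (line y i tau)) 0 (/s) (Df y)). rewrite Rmult_0_r. replace (Df y) with (Df (line y i 0)) by (rewrite line0; auto).
    eapply partial_shift; [exact Hp|]. rewrite line0; auto. }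
  destruct (line_in U y i HU Hy) as [d [Hd Hl]].
  assert (L3: derivable_pt_lim (fun t => f (line (vscal s y) i t) * s ^ m) 0 (Df y * /s)).
  { apply (dloc (fun t => f (line y i (/s * t))) _ _ _ (d * s)); [nra| |exact L2].
    intros t Ht. rewrite Rminus_0_r in Ht.
    assert (Ep: line (vscal s y) i t = vscal s (line y i (/s * t)))
      by (unfold line; apply R3_ext; repeat rewrite ?cf_vadd, ?cf_vscal; field; lra).
    rewrite Ep, Hh; auto. apply Hl. rewrite Rabs_mult, Rabs_inv, (Rabs_pos_eq s) by lra.
    apply Rmult_lt_reg_l with s; [lra|]. field_simplify; lra. }
  pose proof (uniqueness_limite _ _ _ _ L1 L3) as E.
  simpl. replace (Df (vscal s y) * (s * s ^ m)) with ((Df (vscal s y) * s ^ m) * s) by ring.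
  rewrite E. field. lra.
Qed.

Lemma euler U f Df m y : S2open U -> cone U y ->
  (forall y s, cone U y -> 0 < s -> f (vscal s y) * s ^ m = f y) ->
  (forall k, (k < 3)%nat -> is_partial f k (Df k) (cone U)) ->
  (forall k, (k < 3)%nat -> cont3 (Df k) (cone U)) ->
  sum3 (fun k => cf y k * Df k y) = - INR m * f y.
Proof.
  intros HU Hy Hh Hp Hc.
  pose proof (dir_deriv U f Df y y HU Hy Hp Hc) as D1.
  assert (D2: derivable_pt_lim (fun t => (1 + t) ^ m) 0 (INR m)).
  { assert (H: derivable_pt_lim (fun t => 1 + t) 0 1).
    { apply (dreplace _ _ (0 + 1)); [apply dplus; [apply dconst|apply did]|ring]. }
    pose proof (derivable_pt_lim_comp (fun t => 1 + t) (fun z => z ^ m) 0 1 _ H (derivable_pt_lim_pow _ m)).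
    apply (dreplace _ _ _ _ H0). rewrite Rplus_0_r, pow1. ring. }
  pose proof (dmult _ _ _ _ _ D1 D2) as D3.
  assert (D4: derivable_pt_lim (fun t => f (vadd y (vscal t y)) * (1 + t) ^ m) 0 0).
  { apply (dloc (fun _ => f y) _ _ _ (1/2)); [lra| |apply dconst].
    intros t Ht. rewrite Rminus_0_r in Ht. apply Rabs_def2 in Ht.
    assert (E: vadd y (vscal t y) = vscal (1 + t) y)
      by (apply R3_ext; repeat rewrite ?cf_vadd, ?cf_vscal; ring).
    rewrite E, Hh; auto; lra. }
  pose proof (uniqueness_limite _ _ _ _ D3 D4) as E.
  assert (Ey: vadd y (vscal 0 y) = y) by (apply R3_ext; repeat rewrite ?cf_vadd, ?cf_vscal; ring).
  cbv beta in E. rewrite Ey, Rplus_0_r, pow1 in E. lra.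
Qed.

Lemma sum3_bound f M : (forall i, (i < 3)%nat -> Rabs (f i) <= M) -> Rabs (sum3 f) <= 3 * M.
Proof. intros H. unfold sum3. pose proof (H 0%nat ltac:(lia)); pose proof (H 1%nat ltac:(lia));
  pose proof (H 2%nat ltac:(lia)). eapply Rle_trans. apply Rabs_triang.
  eapply Rle_trans. apply Rplus_le_compat_r. apply Rabs_triang. lra. Qed.

Definition cross (x q : R3) : R3 :=
  mk3 (cf x 1 * cf q 2 - cf x 2 * cf q 1) (cf x 2 * cf q 0 - cf x 0 * cf q 2)
      (cf x 0 * cf q 1 - cf x 1 * cf q 0).

Definition delta (i j : nat) : R := if Nat.eqb i j then 1 else 0.

Lemma completeness x q : dot x x = 1 -> dot q q = 1 -> dot x q = 0 ->
  forall i j, (i < 3)%nat -> (j < 3)%nat ->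
  cf q i * cf q j + cf (cross x q) i * cf (cross x q) j + cf x i * cf x j = delta i j.
Proof.
  intros H1 H2 H3 i j Hi Hj.
  destruct x as [[x0 x1] x2]; destruct q as [[q0 q1] q2]. unfold dot, sum3, cross, mk3 in *; cbn [cf fst snd] in *.
  destruct i as [|[|[|i]]]; try lia; destruct j as [|[|[|j]]]; try lia; unfold delta; cbn [Nat.eqb cf fst snd];
  match goal with |- ?qi * ?qj + _ + ?xi * ?xj = ?dv =>
  transitivity (dv*((x0*x0+x1*x1+x2*x2)*(q0*q0+q1*q1+q2*q2) - (x0*q0+x1*q1+x2*q2)*(x0*q0+x1*q1+x2*q2))
    - (q0*q0+q1*q1+q2*q2)*xi*xj - (x0*x0+x1*x1+x2*x2)*qi*qj + (x0*q0+x1*q1+x2*q2)*(xi*qj+xj*qi)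
    + qi*qj + xi*xj); [ring| rewrite H1, H2, H3; ring] end.
Qed.

Definition quad3 (F : nat -> nat -> R) (u v : R3) : R :=
  sum3 (fun a => sum3 (fun b => F a b * cf u a * cf v b)).

Ltac dest3 i := destruct i as [|[|[|i]]]; [| | |lia].

Lemma decomp x q (w : nat -> nat -> R) : dot x x = 1 -> dot q q = 1 -> dot x q = 0 ->
  (forall a b, (a < 3)%nat -> (b < 3)%nat -> w a b = w b a) ->
  (forall a, (a < 3)%nat -> sum3 (fun b => w a b * cf x b) = 0) ->
  forall a b, (a < 3)%nat -> (b < 3)%nat ->
  w a b = quad3 w q q * cf q a * cf q b
        + quad3 w (cross x q) q * (cf q a * cf (cross x q) b + cf (cross x q) a * cf q b)
        + quad3 w (cross x q) (cross x q) * cf (cross x q) a * cf (cross x q) b.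
Proof.
  intros H1 H2 H3 Hs Hwx a b Ha Hb.
  set (r := cross x q).
  set (P := fun i j => cf q i * cf q j + cf r i * cf r j + cf x i * cf x j).
  assert (HP: forall i j, (i < 3)%nat -> (j < 3)%nat -> P i j = delta i j)
    by (intros; apply completeness; auto).
  assert (E1: w a b = sum3 (fun c => P a c * sum3 (fun d => w c d * P d b))).
  { unfold sum3. rewrite !HP by lia. dest3 a; dest3 b; unfold delta; cbn [Nat.eqb]; ring. }
  rewrite E1. clear E1 HP.
  pose proof (Hwx 0%nat ltac:(lia)) as W0; pose proof (Hwx 1%nat ltac:(lia)) as W1;
  pose proof (Hwx 2%nat ltac:(lia)) as W2.
  set (Q := fun i j => cf q i * cf q j + cf r i * cf r j).
  transitivity (quad3 w q q * cf q a * cf q b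
        + quad3 w r q * (cf q a * cf r b + cf r a * cf q b)
        + quad3 w r r * cf r a * cf r b
        + (Q a 0%nat * sum3 (fun d => w 0%nat d * cf x d) + Q a 1%nat * sum3 (fun d => w 1%nat d * cf x d)
           + Q a 2%nat * sum3 (fun d => w 2%nat d * cf x d)) * cf x b
        + cf x a * (sum3 (fun d => w 0%nat d * cf x d) * Q 0%nat b + sum3 (fun d => w 1%nat d * cf x d) * Q 1%nat b
           + sum3 (fun d => w 2%nat d * cf x d) * Q 2%nat b)
        + cf x a * cf x b * (cf x 0 * sum3 (fun d => w 0%nat d * cf x d) + cf x 1 * sum3 (fun d => w 1%nat d * cf x d)
           + cf x 2 * sum3 (fun d => w 2%nat d * cf x d))).
  2: { rewrite W0, W1, W2. ring. }
  unfold P, Q, quad3, sum3.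
  rewrite (Hs 1%nat 0%nat), (Hs 2%nat 0%nat), (Hs 2%nat 1%nat) by lia. ring.
Qed.

Lemma quad3_sym F u v : (forall a b, (a < 3)%nat -> (b < 3)%nat -> F a b = F b a) ->
  quad3 F u v = quad3 F v u.
Proof. intros Hs. unfold quad3, sum3.
  rewrite (Hs 1%nat 0%nat), (Hs 2%nat 0%nat), (Hs 2%nat 1%nat) by lia. ring. Qed.

Lemma unit_cf_le v i : dot v v = 1 -> Rabs (cf v i) <= 1.
Proof. intros H. eapply Rle_trans. apply abs_cf_le. unfold norm3. rewrite H, sqrt_1. lra. Qed.

Lemma ineq_core (lam Lam K : R) (x p : R3) (w F : nat -> nat -> R) (D : nat -> nat -> nat -> R) :
  0 < lam -> lam <= Lam ->
  dot x x = 1 -> dot x p = 0 ->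
  (forall a b, (a < 3)%nat -> (b < 3)%nat -> w a b = w b a) ->
  (forall a, (a < 3)%nat -> sum3 (fun b => w a b * cf x b) = 0) ->
  (forall a b, (a < 3)%nat -> (b < 3)%nat -> F a b = F b a) ->
  (forall xi, dot xi x = 0 -> lam * dot xi xi <= quad3 F xi xi <= Lam * dot xi xi) ->
  sum3 (fun a => sum3 (fun b => F a b * w a b)) = 0 ->
  (forall a b j, (a < 3)%nat -> (b < 3)%nat -> (j < 3)%nat -> Rabs (D a b j) <= K) ->
  Rabs (sum3 (fun j => cf p j * sum3 (fun a => sum3 (fun b => D a b j * w a b))))
  <= (27 * K * (3 + 3 * Lam / lam)) *
       norm3 (mk3 (sum3 (fun b => w 0%nat b * cf p b)) (sum3 (fun b => w 1%nat b * cf p b))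
                  (sum3 (fun b => w 2%nat b * cf p b))).
Proof.
  intros Hl HL Hx Hxp Hws Hwx HFs Hell Htr HD.
  assert (HK: 0 <= K) by (pose proof (HD 0%nat 0%nat 0%nat ltac:(lia) ltac:(lia) ltac:(lia)); pose proof (Rabs_pos (D 0%nat 0%nat 0%nat)); lra).
  assert (HC0: 0 <= 3 + 3 * Lam / lam) by (assert (0 <= Lam / lam) by (unfold Rdiv; apply Rmult_le_pos; [lra| left; apply Rinv_0_lt_compat; lra]); lra).
  set (C0 := 3 + 3 * Lam / lam) in *.
  set (n := norm3 p).
  pose proof (norm3_ge0 p) as Hn0. fold n in Hn0.
  destruct (Req_dec n 0) as [Hn|Hn].
  {
    assert (Hp0: forall i, cf p i = 0).
    { intros i. pose proof (abs_cf_le p i). fold n in H. rewrite Hn in H.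
      pose proof (Rabs_pos (cf p i)). assert (Rabs (cf p i) = 0) by lra. unfold Rabs in H1; destruct (Rcase_abs (cf p i)); lra. }
    assert (Z: sum3 (fun j => cf p j * sum3 (fun a => sum3 (fun b => D a b j * w a b))) = 0)
      by (unfold sum3; rewrite !Hp0; ring).
    rewrite Z, Rabs_R0.
    assert (0 <= norm3 (mk3 (sum3 (fun b => w 0%nat b * cf p b)) (sum3 (fun b => w 1%nat b * cf p b))
                  (sum3 (fun b => w 2%nat b * cf p b)))) by apply norm3_ge0.
    assert (0 <= 27 * K * C0) by (apply Rmult_le_pos; [lra|auto]).
    nra. }
  assert (Hnp: 0 < n) by lra.
  set (q := vscal (/n) p).
  assert (Hpq: forall i, cf p i = n * cf q i).
  { intros i. unfold q. rewrite cf_vscal. field. lra. }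
  assert (Hqq: dot q q = 1).
  { assert (dot p p = n * n) by (symmetry; apply norm3_sq).
    assert (dot p p = n * n * dot q q) by (unfold dot, sum3; rewrite !Hpq; ring).
    apply (Rmult_eq_reg_l (n*n)); [lra| intro; nra]. }
  assert (Hxq: dot x q = 0).
  { assert (dot x p = n * dot x q) by (unfold dot, sum3; rewrite !Hpq; ring).
    apply (Rmult_eq_reg_l n); lra. }
  set (r := cross x q).
  assert (Hrr: dot r r = 1).
  { transitivity (dot x x * dot q q - dot x q * dot x q).
    - unfold r, cross, dot, sum3, mk3; cbn [cf fst snd]. ring.
    - rewrite Hx, Hqq, Hxq; ring. }
  assert (Hrx: dot r x = 0) by (unfold r, cross, dot, sum3, mk3; cbn [cf fst snd]; ring).
  assert (Hrq: dot r q = 0) by (unfold r, cross, dot, sum3, mk3; cbn [cf fst snd]; ring).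
  assert (Hqx: dot q x = 0) by (rewrite <- Hxq; unfold dot, sum3; ring).
  pose proof (decomp x q w Hx Hqq Hxq Hws Hwx) as Dc. fold r in Dc.
  set (A := quad3 w q q) in *. set (B := quad3 w r q) in *. set (Dd := quad3 w r r) in *.
  assert (Hwq: forall i, (i < 3)%nat -> sum3 (fun b => w i b * cf q b) = A * cf q i + B * cf r i).
  { intros i Hi. unfold sum3 at 1.
    rewrite (Dc i 0%nat Hi ltac:(lia)), (Dc i 1%nat Hi ltac:(lia)), (Dc i 2%nat Hi ltac:(lia)).
    transitivity (A * cf q i * dot q q + B * (cf q i * dot r q + cf r i * dot q q) + Dd * cf r i * dot r q).
    - unfold dot, sum3; ring.
    - rewrite Hqq, Hrq; ring. }
  set (s := sqrt (A * A + B * B)).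
  assert (Hs0: 0 <= s) by apply sqrt_pos.
  assert (Hss: s * s = A * A + B * B) by (apply sqrt_sqrt; nra).
  assert (HA: Rabs A <= s).
  { apply Rsqr_incr_0_var; auto. unfold Rsqr. rewrite <- Rabs_mult, Rabs_pos_eq by nra. nra. }
  assert (HB: Rabs B <= s).
  { apply Rsqr_incr_0_var; auto. unfold Rsqr. rewrite <- Rabs_mult, Rabs_pos_eq by nra. nra. }
  assert (Hg: norm3 (mk3 (sum3 (fun b => w 0%nat b * cf p b)) (sum3 (fun b => w 1%nat b * cf p b))
                  (sum3 (fun b => w 2%nat b * cf p b))) = n * s).
  { assert (E: forall i, (i < 3)%nat -> sum3 (fun b => w i b * cf p b) = n * (A * cf q i + B * cf r i)).
    { intros i Hi. rewrite <- (Hwq i Hi). unfold sum3. rewrite !Hpq. ring. }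
    rewrite (E 0%nat), (E 1%nat), (E 2%nat) by lia.
    unfold norm3. unfold s.
    replace (dot _ _) with (n*n * (A * A * dot q q + 2 * A * B * dot r q + B * B * dot r r))
      by (unfold dot, sum3, mk3; cbn [cf fst snd]; ring).
    rewrite Hqq, Hrq, Hrr.
    replace (A * A * 1 + 2 * A * B * 0 + B * B * 1) with (A * A + B * B) by ring.
    rewrite sqrt_mult_alt by nra. rewrite sqrt_square by lra. reflexivity. }
  rewrite Hg.
  set (f11 := quad3 F q q). set (f12 := quad3 F q r). set (f22 := quad3 F r r).
  destruct (Hell q Hqx) as [E11a E11b]. rewrite Hqq in E11a, E11b. fold f11 in E11a, E11b.
  destruct (Hell r Hrx) as [E22a E22b]. rewrite Hrr in E22a, E22b. fold f22 in E22a, E22b.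
  assert (Hp: dot (vadd q r) x = 0)
    by (transitivity (dot q x + dot r x); [unfold dot, sum3; rewrite !cf_vadd; ring|rewrite Hqx, Hrx; ring]).
  assert (Hm: dot (vsub q r) x = 0)
    by (transitivity (dot q x - dot r x); [unfold dot, sum3; rewrite !cf_vsub; ring|rewrite Hqx, Hrx; ring]).
  destruct (Hell _ Hp) as [Epa Epb]. destruct (Hell _ Hm) as [Ema Emb].
  assert (Ep1: dot (vadd q r) (vadd q r) = dot q q + 2 * dot r q + dot r r)
    by (unfold dot, sum3; rewrite !cf_vadd; ring).
  assert (Em1: dot (vsub q r) (vsub q r) = dot q q - 2 * dot r q + dot r r)
    by (unfold dot, sum3; rewrite !cf_vsub; ring).
  assert (Ep2: quad3 F (vadd q r) (vadd q r) = f11 + 2 * f12 + f22).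
  { unfold f11, f12, f22. unfold quad3, sum3; rewrite !cf_vadd.
    rewrite (HFs 1%nat 0%nat), (HFs 2%nat 0%nat), (HFs 2%nat 1%nat) by lia. ring. }
  assert (Em2: quad3 F (vsub q r) (vsub q r) = f11 - 2 * f12 + f22).
  { unfold f11, f12, f22. unfold quad3, sum3; rewrite !cf_vsub.
    rewrite (HFs 1%nat 0%nat), (HFs 2%nat 0%nat), (HFs 2%nat 1%nat) by lia. ring. }
  rewrite Ep1, Ep2, Hqq, Hrq, Hrr in Epb. rewrite Em1, Em2, Hqq, Hrq, Hrr in Emb.
  assert (Hf12: Rabs f12 <= Lam) by (apply Rabs_le; lra).
  assert (Htr2: A * f11 + 2 * B * f12 + Dd * f22 = 0).
  { rewrite <- Htr. unfold sum3.
    rewrite !(Dc 0%nat 0%nat), !(Dc 0%nat 1%nat), !(Dc 0%nat 2%nat), !(Dc 1%nat 0%nat), !(Dc 1%nat 1%nat),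
      !(Dc 1%nat 2%nat), !(Dc 2%nat 0%nat), !(Dc 2%nat 1%nat), !(Dc 2%nat 2%nat) by lia.
    unfold f11, f12, f22, quad3, sum3.
    rewrite (HFs 1%nat 0%nat), (HFs 2%nat 0%nat), (HFs 2%nat 1%nat) by lia. ring. }
  assert (HDd: Rabs Dd <= 3 * Lam * s / lam).
  { assert (Rabs Dd * f22 <= 3 * Lam * s).
    { replace (Rabs Dd * f22) with (Rabs (Dd * f22)) by (rewrite Rabs_mult, (Rabs_pos_eq f22) by lra; ring).
      replace (Dd * f22) with (- (A * f11 + 2 * B * f12)) by lra. rewrite Rabs_Ropp.
      eapply Rle_trans. apply Rabs_triang. rewrite !Rabs_mult, (Rabs_pos_eq f11), (Rabs_pos_eq 2) by lra.
      pose proof (Rabs_pos A); pose proof (Rabs_pos B); pose proof (Rabs_pos f12). nra. }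
    pose proof (Rabs_pos Dd).
    apply (Rmult_le_reg_r lam); [lra|]. unfold Rdiv. rewrite Rmult_assoc, Rinv_l, Rmult_1_r by lra. nra. }
  assert (Hw: forall a b, (a < 3)%nat -> (b < 3)%nat -> Rabs (w a b) <= C0 * s).
  { intros a b Ha Hb. rewrite (Dc a b Ha Hb).
    pose proof (unit_cf_le q a Hqq); pose proof (unit_cf_le q b Hqq);
    pose proof (unit_cf_le r a Hrr); pose proof (unit_cf_le r b Hrr).
    assert (Hprod: forall c u v, Rabs u <= 1 -> Rabs v <= 1 -> Rabs (c * u * v) <= Rabs c).
    { intros c u v Hu Hv. rewrite !Rabs_mult. pose proof (Rabs_pos c); pose proof (Rabs_pos u);
      pose proof (Rabs_pos v). assert (Rabs u * Rabs v <= 1) by nra. nra. }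
    eapply Rle_trans. apply Rabs_triang. eapply Rle_trans. apply Rplus_le_compat_r, Rabs_triang.
    pose proof (Hprod A _ _ H H0). pose proof (Hprod Dd _ _ H1 H2).
    assert (Rabs (B * (cf q a * cf r b + cf r a * cf q b)) <= 2 * Rabs B).
    { rewrite Rmult_plus_distr_l. eapply Rle_trans. apply Rabs_triang.
      rewrite <- !Rmult_assoc. pose proof (Hprod B _ _ H H2). pose proof (Hprod B _ _ H1 H0). lra. }
    unfold C0. replace ((3 + 3 * Lam / lam) * s) with (3 * s + 3 * Lam * s / lam) by (field; lra). lra. }
  assert (HT: Rabs (sum3 (fun j => cf p j * sum3 (fun a => sum3 (fun b => D a b j * w a b))))
              <= 3 * (n * (3 * (3 * (K * (C0 * s)))))).
  { apply sum3_bound. intros j Hj. rewrite Rabs_mult.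
    apply Rmult_le_compat; [apply Rabs_pos|apply Rabs_pos| apply abs_cf_le |].
    apply sum3_bound. intros a Ha. apply sum3_bound. intros b Hb. rewrite Rabs_mult.
    apply Rmult_le_compat; [apply Rabs_pos|apply Rabs_pos| apply HD; auto| apply Hw; auto]. }
  assert (0 <= K * C0 * s) by (apply Rmult_le_pos; [apply Rmult_le_pos|]; lra).
  nra.
Qed.

Lemma ineq (lam Lam K : R) (x p : R3) (w F : nat -> nat -> R) (D : nat -> nat -> nat -> R) :
  0 < lam -> lam <= Lam ->
  dot x x = 1 -> dot x p = 0 ->
  (forall a b, (a < 3)%nat -> (b < 3)%nat -> w a b = w b a) ->
  (forall a, (a < 3)%nat -> sum3 (fun b => w a b * cf x b) = 0) ->
  (forall a b, (a < 3)%nat -> (b < 3)%nat -> F a b = F b a) ->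
  (forall xi, dot xi x = 0 -> lam * dot xi xi <= quad3 F xi xi <= Lam * dot xi xi) ->
  sum3 (fun a => sum3 (fun b => F a b * w a b)) = 0 ->
  (forall a b j, (a < 3)%nat -> (b < 3)%nat -> (j < 3)%nat -> Rabs (D a b j) <= K) ->
  2 * sum3 (fun j => sum3 (fun a => sum3 (fun b => F a b * w j a * w j b)))
   - 2 * sum3 (fun j => cf p j * sum3 (fun a => sum3 (fun b => D a b j * w a b)))
  >= - (27 * K * (3 + 3 * Lam / lam)) *
       norm3 (mk3 (2 * sum3 (fun b => w 0%nat b * cf p b)) (2 * sum3 (fun b => w 1%nat b * cf p b))
                  (2 * sum3 (fun b => w 2%nat b * cf p b))).
Proof.
  intros Hl HL Hx Hxp Hws Hwx HFs Hell Htr HD.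
  pose proof (ineq_core lam Lam K x p w F D Hl HL Hx Hxp Hws Hwx HFs Hell Htr HD) as Hc.
  assert (Q0: 0 <= sum3 (fun j => sum3 (fun a => sum3 (fun b => F a b * w j a * w j b)))).
  { assert (forall j, (j < 3)%nat -> 0 <= sum3 (fun a => sum3 (fun b => F a b * w j a * w j b))).
    { intros j Hj. set (xi := mk3 (w j 0%nat) (w j 1%nat) (w j 2%nat)).
      assert (Hxi: dot xi x = 0).
      { rewrite <- (Hwx j Hj). unfold xi, dot, sum3, mk3; cbn [cf fst snd]. ring. }
      destruct (Hell xi Hxi) as [Hq _].
      assert (E: quad3 F xi xi = sum3 (fun a => sum3 (fun b => F a b * w j a * w j b)))
        by (unfold quad3, xi, sum3, mk3; cbn [cf fst snd]; reflexivity).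
      rewrite <- E. pose proof (dot_ge0 xi). nra. }
    unfold sum3 at 1. pose proof (H 0%nat ltac:(lia)); pose proof (H 1%nat ltac:(lia)); pose proof (H 2%nat ltac:(lia)). lra. }
  change (mk3 (2 * sum3 (fun b => w 0%nat b * cf p b)) (2 * sum3 (fun b => w 1%nat b * cf p b))
                  (2 * sum3 (fun b => w 2%nat b * cf p b)))
    with (vscal 2 (mk3 (sum3 (fun b => w 0%nat b * cf p b)) (sum3 (fun b => w 1%nat b * cf p b))
                  (sum3 (fun b => w 2%nat b * cf p b)))).
  rewrite norm3_scal by lra. apply abs_le_inv in Hc. lra.
Qed.

Lemma dext f g x l : (forall t, f t = g t) -> derivable_pt_lim f x l -> derivable_pt_lim g x l.
Proof. intros E. apply (dloc f g x l 1); [lra|]. intros; auto. Qed.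

Lemma dinv f x l : derivable_pt_lim f x l -> f x <> 0 ->
  derivable_pt_lim (fun t => / f t) x (- l / (f x * f x)).
Proof. intros H Hn.
  pose proof (derivable_pt_lim_div (fun _ => 1) f x 0 l (dconst 1 x) H Hn) as H2.
  apply (dext (fun t => 1 / f t)); [intros; unfold Rdiv; ring|].
  apply (dreplace _ _ _ _ H2). unfold Rsqr. field. auto. Qed.

Lemma dsqrt f x l : derivable_pt_lim f x l -> 0 < f x ->
  derivable_pt_lim (fun t => sqrt (f t)) x (l / (2 * sqrt (f x))).
Proof. intros H Hp.
  pose proof (derivable_pt_lim_comp f sqrt x l _ H (derivable_pt_lim_sqrt _ Hp)).
  apply (dreplace _ _ _ _ H0). unfold Rdiv. ring. Qed.

Lemma d_cf y i j : derivable_pt_lim (fun t => cf (line y i t) j) 0 (cf (ebase i) j).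
Proof. apply (dext (fun t => cf y j + t * cf (ebase i) j)).
  - intros t. unfold line. rewrite cf_vadd, cf_vscal. ring.
  - eapply dreplace; [dsolve|]. cbv beta. ring.
Qed.

Ltac dauto := eapply dreplace; [dsolve|]; cbv beta.

Lemma d_part f i Df V y : is_partial f i Df V -> V y ->
  derivable_pt_lim (fun t => f (line y i t)) 0 (Df y).
Proof. intros H Hy. exact (H y Hy). Qed.

Lemma pd_eq U g G Dg i y L : S2open U -> cone U y -> is_partial g i Dg (cone U) ->
  (forall z, cone U z -> g z = G z) ->
  derivable_pt_lim (fun t => G (line y i t)) 0 L -> Dg y = L.
Proof.
  intros HU Hy Hp E HL. destruct (line_in U y i HU Hy) as [d [Hd Hl]].
  apply (uniqueness_limite (fun t => G (line y i t)) 0); auto.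
  apply (dloc (fun t => g (line y i t)) _ _ _ d Hd).
  - intros t Ht. apply E, Hl. rewrite Rminus_0_r in Ht; auto.
  - apply (d_part g i Dg (cone U) y Hp Hy).
Qed.

Lemma d_dot y i : derivable_pt_lim (fun t => dot (line y i t) (line y i t)) 0
   (2 * sum3 (fun j => cf y j * cf (ebase i) j)).
Proof.
  pose proof (d_cf y i 0); pose proof (d_cf y i 1); pose proof (d_cf y i 2).
  unfold dot, sum3. dauto. rewrite !line0. ring.
Qed.

Lemma d_norm y i : y <> mk3 0 0 0 ->
  derivable_pt_lim (fun t => norm3 (line y i t)) 0 (sum3 (fun j => cf y j * cf (ebase i) j) / norm3 y).
Proof. intros H. unfold norm3. eapply dreplace. apply dsqrt. apply d_dot.
  cbv beta. rewrite line0. apply dot_pos; auto. cbv beta. rewrite line0.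
  pose proof (norm3_pos y H). unfold norm3 in H0. field. lra. Qed.

Lemma d_inorm y i : y <> mk3 0 0 0 ->
  derivable_pt_lim (fun t => / norm3 (line y i t)) 0
    (- sum3 (fun j => cf y j * cf (ebase i) j) / (norm3 y * norm3 y * norm3 y)).
Proof. intros H. pose proof (norm3_pos y H). eapply dreplace. apply dinv. apply d_norm; auto.
  cbv beta; rewrite line0. lra. cbv beta; rewrite line0. field. lra. Qed.


Section S.
Variables (U : R3 -> Prop) (u : R3 -> R) (Du : nat -> R3 -> R) (D2u : nat -> nat -> R3 -> R)
  (D3u : nat -> nat -> nat -> R3 -> R).
Hypothesis HU : S2open U.
Hypothesis Pu : forall i, (i < 3)%nat -> is_partial (ext0 u) i (Du i) (cone U).
Hypothesis P2 : forall i j, (i < 3)%nat -> (j < 3)%nat -> is_partial (Du i) j (D2u i j) (cone U).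
Hypothesis P3 : forall i j k, (i < 3)%nat -> (j < 3)%nat -> (k < 3)%nat ->
  is_partial (D2u i j) k (D3u i j k) (cone U).
Hypothesis C1 : forall i, (i < 3)%nat -> cont3 (Du i) (cone U).
Hypothesis C2 : forall i j, (i < 3)%nat -> (j < 3)%nat -> cont3 (D2u i j) (cone U).
Hypothesis C3 : forall i j k, (i < 3)%nat -> (j < 3)%nat -> (k < 3)%nat -> cont3 (D3u i j k) (cone U).

Lemma u_hom0 : forall y s, cone U y -> 0 < s -> ext0 u (vscal s y) * s ^ 0 = ext0 u y.
Proof. intros y s Hy Hs. rewrite ext0_scal by (auto; apply Hy). ring. Qed.

Lemma Du_hom : forall j, (j < 3)%nat -> forall y s, cone U y -> 0 < s -> Du j (vscal s y) * s ^ 1 = Du j y.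
Proof. intros j Hj. apply (hom_partial U (ext0 u) (Du j) j 0 HU u_hom0 (Pu j Hj)). Qed.

Lemma D2u_hom : forall i j, (i < 3)%nat -> (j < 3)%nat ->
  forall y s, cone U y -> 0 < s -> D2u i j (vscal s y) * s ^ 2 = D2u i j y.
Proof. intros i j Hi Hj. apply (hom_partial U (Du i) (D2u i j) j 1 HU (Du_hom i Hi) (P2 i j Hi Hj)). Qed.

Lemma Eu1 : forall y, cone U y -> sum3 (fun k => cf y k * Du k y) = 0.
Proof. intros y Hy. rewrite (euler U (ext0 u) Du 0 y HU Hy u_hom0 Pu C1). simpl; ring. Qed.

Lemma Eu2 : forall i, (i < 3)%nat -> forall y, cone U y -> sum3 (fun k => cf y k * D2u i k y) = - Du i y.
Proof. intros i Hi y Hy. rewrite (euler U (Du i) (D2u i) 1 y HU Hy (Du_hom i Hi)).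
  simpl; ring. intros; apply P2; auto. intros; apply C2; auto. Qed.

Lemma Hsym : forall i j, (i < 3)%nat -> (j < 3)%nat -> forall y, cone U y -> D2u i j y = D2u j i y.
Proof. intros i j Hi Hj y Hy.
  apply (schwarz U (ext0 u) (Du i) (Du j) (D2u i j) (D2u j i) i j y HU Hy); auto. Qed.

Lemma Tsym1 : forall i j k, (i < 3)%nat -> (j < 3)%nat -> (k < 3)%nat -> forall y, cone U y ->
  D3u i j k y = D3u i k j y.
Proof. intros i j k Hi Hj Hk y Hy.
  apply (schwarz U (Du i) (D2u i j) (D2u i k) (D3u i j k) (D3u i k j) j k y HU Hy); auto. Qed.

Lemma Tsym2 : forall i j k, (i < 3)%nat -> (j < 3)%nat -> (k < 3)%nat -> forall y, cone U y ->
  D3u i j k y = D3u j i k y.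
Proof. intros i j k Hi Hj Hk y Hy.
  apply (pd_eq U (D2u i j) (D2u j i) (D3u i j k) k y (D3u j i k y) HU Hy (P3 i j k Hi Hj Hk)).
  - intros z Hz. apply Hsym; auto.
  - apply (d_part _ _ _ _ _ (P3 j i k Hj Hi Hk) Hy). Qed.

End S.

Definition Wm (x : R3) (p : nat -> R) (H : nat -> nat -> R) (u : R) (a b : nat) : R :=
  H a b + cf x a * p b + p a * cf x b + u * (delta a b - cf x a * cf x b).

Definition HR (x : R3) (p : nat -> R) (H : nat -> nat -> R) (T : nat -> nat -> nat -> R) (u : R) (i k : nat) : R :=
  2 * sum3 (fun j => cf (ebase k) j * cf (ebase i) j) * sum3 (fun j => p j * p j)
  + 2 * sum3 (fun j => cf x j * cf (ebase i) j) * (2 * sum3 (fun j => p j * H j k))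
  + 2 * sum3 (fun j => cf x j * cf (ebase k) j) * (2 * sum3 (fun j => p j * H j i))
  + dot x x * (2 * sum3 (fun j => H j k * H j i + p j * T j i k))
  + 2 * (p k * p i + u * H i k).

Definition cFx (x : R3) (F : nat -> nat -> R) a := sum3 (fun b => F a b * cf x b).
Definition cHx (x : R3) (p : nat -> R) (H : nat -> nat -> R) b := sum3 (fun k => cf x k * H b k) + p b.
Definition cG (x : R3) (F : nat -> nat -> R) (D : nat -> nat -> nat -> R) b j :=
  sum3 (fun a => D b a j * cf x a) + F b j.
Definition SFH (F H : nat -> nat -> R) := sum3 (fun a => sum3 (fun b => F a b * H a b)).
Definition trF (F : nat -> nat -> R) := sum3 (fun a => F a a).
Definition cPDE (x : R3) (p : nat -> R) (H : nat -> nat -> R) (T : nat -> nat -> nat -> R)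
  (F : nat -> nat -> R) (D : nat -> nat -> nat -> R) (u : R) c :=
  2 * cf x c * SFH F H + sum3 (fun a => sum3 (fun b => D a b c * H a b + F a b * T a b c))
  + p c * trF F + u * sum3 (fun a => D a a c).

Ltac symrw HHs HFs HDs Tp132 Tp213 Tp231 Tp312 Tp321 := rewrite ?(HHs 1%nat 0%nat) by lia; rewrite ?(HHs 2%nat 0%nat) by lia; rewrite ?(HHs 2%nat 1%nat) by lia; rewrite ?(HFs 1%nat 0%nat) by lia; rewrite ?(HFs 2%nat 0%nat) by lia; rewrite ?(HFs 2%nat 1%nat) by lia; rewrite ?(HDs 1%nat 0%nat 0%nat) by lia; rewrite ?(HDs 2%nat 0%nat 0%nat) by lia; rewrite ?(HDs 2%nat 1%nat 0%nat) by lia; rewrite ?(HDs 1%nat 0%nat 1%nat) by lia; rewrite ?(HDs 2%nat 0%nat 1%nat) by lia; rewrite ?(HDs 2%nat 1%nat 1%nat) by lia; rewrite ?(HDs 1%nat 0%nat 2%nat) by lia; rewrite ?(HDs 2%nat 0%nat 2%nat) by lia; rewrite ?(HDs 2%nat 1%nat 2%nat) by lia; rewrite ?(Tp132 0%nat 1%nat 0%nat) by lia; rewrite ?(Tp132 0%nat 2%nat 0%nat) by lia; rewrite ?(Tp132 0%nat 2%nat 1%nat) by lia; rewrite ?(Tp231 1%nat 0%nat 0%nat) by lia; rewrite ?(Tp213 1%nat 0%nat 1%nat) by lia; rewrite ?(Tp213 1%nat 0%nat 2%nat) by lia; rewrite ?(Tp312 1%nat 1%nat 0%nat) by lia; rewrite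 ?(Tp312 1%nat 2%nat 0%nat) by lia; rewrite ?(Tp132 1%nat 2%nat 1%nat) by lia; rewrite ?(Tp231 2%nat 0%nat 0%nat) by lia; rewrite ?(Tp231 2%nat 0%nat 1%nat) by lia; rewrite ?(Tp213 2%nat 0%nat 2%nat) by lia; rewrite ?(Tp321 2%nat 1%nat 0%nat) by lia; rewrite ?(Tp231 2%nat 1%nat 1%nat) by lia; rewrite ?(Tp213 2%nat 1%nat 2%nat) by lia; rewrite ?(Tp312 2%nat 2%nat 0%nat) by lia; rewrite ?(Tp312 2%nat 2%nat 1%nat) by lia.

Lemma rho_ident (x : R3) p H T F D u :
  (forall i j, (i < 3)%nat -> (j < 3)%nat -> H i j = H j i) ->
  (forall i j, (i < 3)%nat -> (j < 3)%nat -> F i j = F j i) ->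
  (forall a b c, (a < 3)%nat -> (b < 3)%nat -> (c < 3)%nat -> D a b c = D b a c) ->
  (forall i j k, (i < 3)%nat -> (j < 3)%nat -> (k < 3)%nat -> T i j k = T i k j) ->
  (forall i j k, (i < 3)%nat -> (j < 3)%nat -> (k < 3)%nat -> T i j k = T j i k) ->
  dot x x = 1 -> sum3 (fun k => cf x k * p k) = 0 ->
  (forall b, (b < 3)%nat -> cHx x p H b = 0) ->
  (forall a, (a < 3)%nat -> cFx x F a = 0) ->
  (forall b j, (b < 3)%nat -> (j < 3)%nat -> cG x F D b j = 0) ->
  SFH F H + u * trF F = 0 ->
  (forall c, (c < 3)%nat -> cPDE x p H T F D u c = 0) ->
  sum3 (fun i => sum3 (fun k => F i k * HR x p H T u i k)) =
  2 * sum3 (fun j => sum3 (fun a => sum3 (fun b => F a b * Wm x p H u j a * Wm x p H u j b)))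
  - 2 * sum3 (fun j => p j * sum3 (fun a => sum3 (fun b => D a b j * Wm x p H u a b))).
Proof.
  intros HHs HFs HDs T1 T2 Cxx Cxp CHx CFx CG P0 PC.
  assert (Tp132: forall i j k, (i < 3)%nat -> (j < 3)%nat -> (k < 3)%nat -> T i j k = T i k j) by auto.
  assert (Tp213: forall i j k, (i < 3)%nat -> (j < 3)%nat -> (k < 3)%nat -> T i j k = T j i k) by auto.
  assert (Tp231: forall i j k, (i < 3)%nat -> (j < 3)%nat -> (k < 3)%nat -> T i j k = T j k i)
    by (intros; rewrite T2, T1; auto).
  assert (Tp312: forall i j k, (i < 3)%nat -> (j < 3)%nat -> (k < 3)%nat -> T i j k = T k i j)
    by (intros; rewrite T1, T2; auto).
  assert (Tp321: forall i j k, (i < 3)%nat -> (j < 3)%nat -> (k < 3)%nat -> T i j k = T k j i)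
    by (intros; rewrite T1, T2, T1; auto).
  apply Rminus_diag_uniq.
  transitivity (
   8 * sum3 (fun k => cFx x F k * sum3 (fun j => p j * H j k))
   + 2 * (dot x x - 1) * (sum3 (fun i => sum3 (fun k => F i k * sum3 (fun j => H j k * H j i)))
        + sum3 (fun j => p j * sum3 (fun i => sum3 (fun k => F i k * T j i k))))
   + 2 * sum3 (fun j => p j * cPDE x p H T F D u j)
   - 4 * SFH F H * sum3 (fun k => cf x k * p k)
   - 2 * u * (SFH F H + u * trF F)
   - 4 * sum3 (fun a => sum3 (fun b => p a * F a b * cHx x p H b))
   - 2 * (dot x x - 1) * sum3 (fun a => sum3 (fun b => p a * F a b * p b))
   - 4 * u * sum3 (fun b => p b * cFx x F b)
   - 2 * sum3 (fun j => 2 * (p j - u * cf x j) * sum3 (fun b => cFx x F b * (H j b + cf x j * p b + u * delta j b))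
                        + (p j - u * cf x j) * (p j - u * cf x j) * sum3 (fun b => cFx x F b * cf x b))
   + 4 * sum3 (fun j => sum3 (fun b => p j * p b * cG x F D b j))
   - 2 * u * sum3 (fun j => sum3 (fun b => p j * cf x b * cG x F D b j))
   + 2 * u * sum3 (fun j => p j * cFx x F j)).
  - unfold HR, Wm, cFx, cHx, cG, cPDE, SFH, trF, delta, dot, sum3.
    cbn [ebase cf Nat.eqb]. unfold mk3; cbn [fst snd].
    symrw HHs HFs HDs Tp132 Tp213 Tp231 Tp312 Tp321.
    ring.
  - rewrite Cxx, Cxp, P0. unfold sum3.
    rewrite !CFx, !CHx, !CG, !PC by lia. ring.
Qed.

Definition HP (x : R3) (p : nat -> R) (H : nat -> nat -> R) (T : nat -> nat -> nat -> R) (u : R)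
  (E : R3) (N : R) (i k : nat) : R :=
  let zi := sum3 (fun j => cf x j * cf (ebase i) j) in
  let zk := sum3 (fun j => cf x j * cf (ebase k) j) in
  let dik := sum3 (fun j => cf (ebase k) j * cf (ebase i) j) in
  let Ei := sum3 (fun j => cf E j * cf (ebase i) j) in
  let Ek := sum3 (fun j => cf E j * cf (ebase k) j) in
  let Ep := sum3 (fun j => cf E j * p j) in
  let Ez := sum3 (fun j => cf E j * cf x j) in
  let EHi := sum3 (fun j => cf E j * H j i) in
  let EHk := sum3 (fun j => cf E j * H j k) in
  let TE := sum3 (fun j => cf E j * T j i k) in
  (dik / N + zi * (- zk / (N*N*N))) * Ep + zi / N * EHk + (zk / N) * EHi + N * TE
  + H i k * Ez / N + p i * Ek / N + p i * Ez * (- zk / (N*N*N))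
  + p k * (Ei / N - Ez * zi / (N*N*N))
  + u * (Ei * (- zk / (N*N*N)) + Ek * (- zi / (N*N*N)) + Ez * (- dik / (N*N*N))
         + Ez * (- zi) * (- 3 * zk / (N*N*N*N*N))).

Lemma phi_ident (x : R3) p H T F D u E :
  (forall i j, (i < 3)%nat -> (j < 3)%nat -> H i j = H j i) ->
  (forall i j, (i < 3)%nat -> (j < 3)%nat -> F i j = F j i) ->
  (forall a b c, (a < 3)%nat -> (b < 3)%nat -> (c < 3)%nat -> D a b c = D b a c) ->
  (forall i j k, (i < 3)%nat -> (j < 3)%nat -> (k < 3)%nat -> T i j k = T i k j) ->
  (forall i j k, (i < 3)%nat -> (j < 3)%nat -> (k < 3)%nat -> T i j k = T j i k) ->
  (forall a, (a < 3)%nat -> cFx x F a = 0) ->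
  (forall b j, (b < 3)%nat -> (j < 3)%nat -> cG x F D b j = 0) ->
  SFH F H + u * trF F = 0 ->
  (forall c, (c < 3)%nat -> cPDE x p H T F D u c = 0) ->
  sum3 (fun i => sum3 (fun k => F i k * HP x p H T u E 1 i k)) =
  - sum3 (fun j => cf E j * sum3 (fun a => sum3 (fun b => D a b j * Wm x p H u a b))).
Proof.
  intros HHs HFs HDs T1 T2 CFx CG P0 PC.
  assert (Tp132: forall i j k, (i < 3)%nat -> (j < 3)%nat -> (k < 3)%nat -> T i j k = T i k j) by auto.
  assert (Tp213: forall i j k, (i < 3)%nat -> (j < 3)%nat -> (k < 3)%nat -> T i j k = T j i k) by auto.
  assert (Tp231: forall i j k, (i < 3)%nat -> (j < 3)%nat -> (k < 3)%nat -> T i j k = T j k i)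
    by (intros; rewrite T2, T1; auto).
  assert (Tp312: forall i j k, (i < 3)%nat -> (j < 3)%nat -> (k < 3)%nat -> T i j k = T k i j)
    by (intros; rewrite T1, T2; auto).
  assert (Tp321: forall i j k, (i < 3)%nat -> (j < 3)%nat -> (k < 3)%nat -> T i j k = T k j i)
    by (intros; rewrite T1, T2, T1; auto).
  apply Rminus_diag_uniq.
  transitivity (
    sum3 (fun k => cFx x F k * (- cf x k * sum3 (fun j => cf E j * p j) + sum3 (fun j => cf E j * H j k)
       - p k * sum3 (fun j => cf E j * cf x j) - u * cf E k + 3 * u * sum3 (fun j => cf E j * cf x j) * cf x k))
    + sum3 (fun i => cFx x F i * (sum3 (fun j => cf E j * H j i) - p i * sum3 (fun j => cf E j * cf x j) - u * cf E i))
    + sum3 (fun j => cf E j * cPDE x p H T F D u j)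
    - sum3 (fun j => cf E j * cf x j) * (SFH F H + u * trF F)
    + 2 * sum3 (fun j => sum3 (fun b => cf E j * p b * cG x F D b j))
    - u * sum3 (fun j => sum3 (fun b => cf E j * cf x b * cG x F D b j))
    + u * sum3 (fun j => cf E j * cFx x F j)).
  - unfold HP, Wm, cFx, cHx, cG, cPDE, SFH, trF, delta, dot, sum3.
    cbn [ebase cf Nat.eqb]. unfold mk3; cbn [fst snd].
    unfold Rdiv. rewrite ?Rmult_1_l, ?Rinv_1.
    symrw HHs HFs HDs Tp132 Tp213 Tp231 Tp312 Tp321.
    ring.
  - rewrite P0. unfold sum3.
    rewrite !CFx, !CG, !PC by lia. ring.
Qed.

Lemma deriv_zero U G y i L : S2open U -> cone U y -> (forall z, cone U z -> G z = 0) ->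
  derivable_pt_lim (fun t => G (line y i t)) 0 L -> L = 0.
Proof.
  intros HU Hy HG HL. destruct (line_in U y i HU Hy) as [d [Hd Hl]].
  apply (uniqueness_limite (fun t => G (line y i t)) 0); auto.
  apply (dloc (fun _ => 0) _ _ _ d Hd); [|apply dconst].
  intros t Ht. rewrite HG; auto. apply Hl. rewrite Rminus_0_r in Ht; auto.
Qed.

Ltac dsolve_with tac := repeat first
  [ apply dplus | apply dminus | apply dmult | apply dopp | apply did | apply dconst
  | apply d_cf | apply d_dot | tac ].
Ltac dauto_with tac := eapply dreplace; [dsolve_with tac|]; cbv beta; rewrite ?line0.

Lemma normalize_cf z j : z <> mk3 0 0 0 -> cf z j = norm3 z * cf (vscal (/ norm3 z) z) j.
Proof. intros H. pose proof (norm3_pos z H). rewrite cf_vscal. field. lra. Qed.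

Section SF.
Variables (U : R3 -> Prop) (F : nat -> nat -> R3 -> R) (DF : nat -> nat -> nat -> R3 -> R).
Hypothesis HU : S2open U.
Hypothesis PF : forall a b c, (a < 3)%nat -> (b < 3)%nat -> (c < 3)%nat ->
  is_partial (ext0 (F a b)) c (DF a b c) (cone U).
Hypothesis CF : forall a b c, (a < 3)%nat -> (b < 3)%nat -> (c < 3)%nat -> cont3 (DF a b c) (cone U).
Hypothesis HFs : forall x, U x -> forall a b, (a < 3)%nat -> (b < 3)%nat -> F a b x = F b a x.
Hypothesis HFt : forall x, U x -> forall a, (a < 3)%nat -> sum3 (fun b => F a b x * cf x b) = 0.

Lemma EF : forall a b, (a < 3)%nat -> (b < 3)%nat -> forall y, cone U y ->
  sum3 (fun c => cf y c * DF a b c y) = 0.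
Proof. intros a b Ha Hb y Hy.
  rewrite (euler U (ext0 (F a b)) (DF a b) 0 y HU Hy). simpl; ring.
  - intros z s Hz Hs. rewrite ext0_scal by (auto; apply Hz). ring.
  - intros; apply PF; auto.
  - intros; apply CF; auto.
Qed.

Lemma DFsym : forall a b c, (a < 3)%nat -> (b < 3)%nat -> (c < 3)%nat -> forall y, cone U y ->
  DF a b c y = DF b a c y.
Proof. intros a b c Ha Hb Hc y Hy.
  apply (pd_eq U (ext0 (F a b)) (ext0 (F b a)) (DF a b c) c y (DF b a c y) HU Hy (PF a b c Ha Hb Hc)).
  - intros z Hz. unfold ext0. apply HFs; auto. apply Hz.
  - apply (d_part _ _ _ _ _ (PF b a c Hb Ha Hc) Hy). Qed.

Lemma F6 : forall a c, (a < 3)%nat -> (c < 3)%nat -> forall x, U x ->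
  sum3 (fun b => DF a b c x * cf x b) + F a c x = 0.
Proof. intros a c Ha Hc x Hx.
  pose proof (cone_unit U x HU Hx) as Hy.
  assert (Hn: norm3 x = 1) by (apply (proj1 HU); auto).
  assert (L: derivable_pt_lim (fun t => sum3 (fun b => ext0 (F a b) (line x c t) * cf (line x c t) b)) 0
     (sum3 (fun b => DF a b c x * cf x b + ext0 (F a b) x * cf (ebase c) b))).
  { unfold sum3. dauto_with ltac:(eapply d_part; [apply PF; lia| exact Hy]). ring. }
  apply (deriv_zero U (fun z => sum3 (fun b => ext0 (F a b) z * cf z b)) x c _ HU Hy) in L.
  - rewrite <- L. unfold sum3. rewrite !ext0_unit by auto. dest3 c; cbn [ebase cf]; unfold mk3; cbn [fst snd]; ring.
  - intros z Hz. destruct Hz as [Hz0 HzU].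
    transitivity (norm3 z * sum3 (fun b => F a b (vscal (/ norm3 z) z) * cf (vscal (/ norm3 z) z) b)).
    + unfold sum3, ext0. rewrite (normalize_cf z 0), (normalize_cf z 1), (normalize_cf z 2) by auto. ring.
    + rewrite HFt by auto. ring.
Qed.

End SF.

Section SP.
Variables (U : R3 -> Prop) (u : R3 -> R) (Du : nat -> R3 -> R) (D2u : nat -> nat -> R3 -> R)
  (D3u : nat -> nat -> nat -> R3 -> R) (F : nat -> nat -> R3 -> R) (DF : nat -> nat -> nat -> R3 -> R).
Hypothesis HU : S2open U.
Hypothesis Pu : forall i, (i < 3)%nat -> is_partial (ext0 u) i (Du i) (cone U).
Hypothesis P2 : forall i j, (i < 3)%nat -> (j < 3)%nat -> is_partial (Du i) j (D2u i j) (cone U).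
Hypothesis P3 : forall i j k, (i < 3)%nat -> (j < 3)%nat -> (k < 3)%nat ->
  is_partial (D2u i j) k (D3u i j k) (cone U).
Hypothesis PF : forall a b c, (a < 3)%nat -> (b < 3)%nat -> (c < 3)%nat ->
  is_partial (ext0 (F a b)) c (DF a b c) (cone U).
Hypothesis Hpde : forall x, U x -> contr F D2u x + u x * sum3 (fun a => F a a x) = 0.

Lemma dotN z : dot z z = norm3 z * norm3 z.
Proof. symmetry; apply norm3_sq. Qed.

Lemma PDEc : forall c, (c < 3)%nat -> forall x, U x ->
  cPDE x (fun i => Du i x) (fun i j => D2u i j x) (fun i j k => D3u i j k x)
    (fun a b => F a b x) (fun a b c => DF a b c x) (u x) c = 0.
Proof.
  intros c Hc x Hx.
  pose proof (cone_unit U x HU Hx) as Hy.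
  assert (Hn: norm3 x = 1) by (apply (proj1 HU); auto).
  set (G := fun z => dot z z * SFH (fun a b => ext0 (F a b) z) (fun a b => D2u a b z)
                     + ext0 u z * trF (fun a b => ext0 (F a b) z)).
  assert (HG: forall z, cone U z -> G z = 0).
  { intros z Hz. pose proof (norm3_pos z (proj1 Hz)) as HN.
    assert (Hs: 0 < / norm3 z) by (apply Rinv_0_lt_compat; auto).
    rewrite <- (Hpde (vscal (/ norm3 z) z) (proj2 Hz)).
    unfold G, SFH, trF, contr, sum3, ext0.
    do 9 (match goal with |- context [D2u ?a ?b z] =>
      rewrite <- (D2u_hom U u Du D2u HU Pu P2 a b ltac:(lia) ltac:(lia) z (/ norm3 z) Hz Hs) end).
    rewrite dotN. field. lra. }
  assert (L: derivable_pt_lim (fun t => G (line x c t)) 0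
    (2 * sum3 (fun j => cf x j * cf (ebase c) j) * SFH (fun a b => F a b x) (fun a b => D2u a b x)
     + dot x x * sum3 (fun a => sum3 (fun b => DF a b c x * D2u a b x + F a b x * D3u a b c x))
     + Du c x * trF (fun a b => F a b x) + u x * sum3 (fun a => DF a a c x))).
  { unfold G, SFH, trF, sum3.
    dauto_with ltac:(first [eapply d_part; [apply PF; lia| exact Hy]
                          | eapply d_part; [apply P3; lia| exact Hy]
                          | eapply d_part; [apply Pu; lia| exact Hy]]).
    rewrite !ext0_unit by auto. ring. }
  apply (deriv_zero U G x c _ HU Hy HG) in L. rewrite <- L.
  unfold cPDE. rewrite dotN, Hn. unfold SFH, trF, sum3. dest3 c; cbn [ebase cf]; unfold mk3; cbn [fst snd]; ring.
Qed.
End SP.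

Definition GR (u : R3 -> R) (Du : nat -> R3 -> R) (D2u : nat -> nat -> R3 -> R) (i : nat) (z : R3) : R :=
  2 * sum3 (fun j => cf z j * cf (ebase i) j) * sum3 (fun j => Du j z * Du j z)
  + dot z z * (2 * sum3 (fun j => Du j z * D2u j i z)) + 2 * (ext0 u z * Du i z).

Definition GP (E : R3) (u : R3 -> R) (Du : nat -> R3 -> R) (D2u : nat -> nat -> R3 -> R) (i : nat) (z : R3) : R :=
  sum3 (fun j => cf z j * cf (ebase i) j) * / norm3 z * sum3 (fun j => cf E j * Du j z)
  + norm3 z * sum3 (fun j => cf E j * D2u j i z)
  + Du i z * sum3 (fun j => cf E j * cf z j) * / norm3 z
  + ext0 u z * (sum3 (fun j => cf E j * cf (ebase i) j) * / norm3 z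
      + sum3 (fun j => cf E j * cf z j) * (- sum3 (fun j => cf z j * cf (ebase i) j) * (/ norm3 z * / norm3 z * / norm3 z))).

Section SL.
Variables (U : R3 -> Prop) (u : R3 -> R) (Du : nat -> R3 -> R) (D2u : nat -> nat -> R3 -> R)
  (D3u : nat -> nat -> nat -> R3 -> R).
Hypothesis HU : S2open U.
Hypothesis Pu : forall i, (i < 3)%nat -> is_partial (ext0 u) i (Du i) (cone U).
Hypothesis P2 : forall i j, (i < 3)%nat -> (j < 3)%nat -> is_partial (Du i) j (D2u i j) (cone U).
Hypothesis P3 : forall i j k, (i < 3)%nat -> (j < 3)%nat -> (k < 3)%nat ->
  is_partial (D2u i j) k (D3u i j k) (cone U).
Hypothesis C1 : forall i, (i < 3)%nat -> cont3 (Du i) (cone U).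

Lemma Du_norm j : (j < 3)%nat -> forall z, cone U z ->
  Du j (vscal (/ norm3 z) z) = norm3 z * Du j z.
Proof. intros Hj z Hz. pose proof (norm3_pos z (proj1 Hz)) as HN.
  assert (Hs: 0 < / norm3 z) by (apply Rinv_0_lt_compat; auto).
  rewrite <- (Du_hom U u Du HU Pu j Hj z (/ norm3 z) Hz Hs). field. lra. Qed.

Lemma rho_form : forall z, cone U z ->
  ext0 (rho_u u Du) z = dot z z * sum3 (fun j => Du j z * Du j z) + ext0 u z * ext0 u z.
Proof.
  intros z Hz. pose proof (norm3_pos z (proj1 Hz)) as HN.
  pose proof (Eu1 U u Du HU Pu C1 z Hz) as E1.
  unfold ext0 at 1. unfold rho_u, Xu, grad.
  fold (ext0 u z).
  replace (dot (vadd _ _) (vadd _ _)) with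
    (sum3 (fun j => (Du j (vscal (/ norm3 z) z) + ext0 u z * cf (vscal (/ norm3 z) z) j) *
                    (Du j (vscal (/ norm3 z) z) + ext0 u z * cf (vscal (/ norm3 z) z) j)))
    by (unfold dot, sum3; rewrite !cf_vadd, !cf_vscal; reflexivity).
  unfold sum3. rewrite !Du_norm by (auto; lia). rewrite !cf_vscal.
  transitivity (dot z z * sum3 (fun j => Du j z * Du j z) + ext0 u z * ext0 u z
    + 2 * ext0 u z * sum3 (fun k => cf z k * Du k z)
    + ext0 u z * ext0 u z * (sum3 (fun j => cf z j * cf z j) / (norm3 z * norm3 z) - 1)).
  - rewrite dotN. unfold sum3. field. lra.
  - rewrite E1. fold (dot z z). rewrite dotN. unfold sum3. field. lra.
Qed.

Lemma phi_form E : forall z, cone U z ->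
  ext0 (phi_E E u Du) z = norm3 z * sum3 (fun j => cf E j * Du j z)
     + ext0 u z * sum3 (fun j => cf E j * cf z j) * / norm3 z.
Proof.
  intros z Hz. pose proof (norm3_pos z (proj1 Hz)) as HN.
  unfold ext0 at 1. unfold phi_E, Xu, grad. fold (ext0 u z).
  unfold dot, sum3. rewrite !cf_vadd, !cf_vscal. cbn [cf mk3]. unfold mk3; cbn [fst snd].
  rewrite !Du_norm by (auto; lia). field. lra.
Qed.

Ltac atoms Hz := first
  [ eapply d_part; [apply Pu; lia| exact Hz]
  | eapply d_part; [apply P2; lia| exact Hz]
  | eapply d_part; [apply P3; lia| exact Hz]
  | apply d_norm; exact (proj1 Hz)
  | apply d_inorm; exact (proj1 Hz) ].

Lemma g_rho (g : nat -> R3 -> R) : (forall i, (i < 3)%nat -> is_partial (ext0 (rho_u u Du)) i (g i) (cone U)) ->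
  forall i, (i < 3)%nat -> forall z, cone U z -> g i z = GR u Du D2u i z.
Proof.
  intros Hg i Hi z Hz.
  apply (pd_eq U (ext0 (rho_u u Du)) (fun z => dot z z * sum3 (fun j => Du j z * Du j z) + ext0 u z * ext0 u z)
           (g i) i z _ HU Hz (Hg i Hi) rho_form).
  unfold sum3. dauto_with ltac:(atoms Hz). unfold GR, sum3. ring.
Qed.

Lemma h_rho (g : nat -> R3 -> R) (h : nat -> nat -> R3 -> R) :
  (forall i, (i < 3)%nat -> is_partial (ext0 (rho_u u Du)) i (g i) (cone U)) ->
  (forall i j, (i < 3)%nat -> (j < 3)%nat -> is_partial (g i) j (h i j) (cone U)) ->
  forall i k, (i < 3)%nat -> (k < 3)%nat -> forall x, U x ->
  h i k x = HR x (fun j => Du j x) (fun a b => D2u a b x) (fun a b c => D3u a b c x) (u x) i k.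
Proof.
  intros Hg Hh i k Hi Hk x Hx.
  pose proof (cone_unit U x HU Hx) as Hz.
  assert (Hn: norm3 x = 1) by (apply (proj1 HU); auto).
  apply (pd_eq U (g i) (GR u Du D2u i) (h i k) k x _ HU Hz (Hh i k Hi Hk) (g_rho g Hg i Hi)).
  unfold GR, sum3. dauto_with ltac:(atoms Hz). rewrite ext0_unit by auto. unfold HR, sum3. ring.
Qed.

Lemma g_phi E (g : nat -> R3 -> R) : (forall i, (i < 3)%nat -> is_partial (ext0 (phi_E E u Du)) i (g i) (cone U)) ->
  forall i, (i < 3)%nat -> forall z, cone U z -> g i z = GP E u Du D2u i z.
Proof.
  intros Hg i Hi z Hz. pose proof (norm3_pos z (proj1 Hz)) as HN.
  apply (pd_eq U (ext0 (phi_E E u Du))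
     (fun z => norm3 z * sum3 (fun j => cf E j * Du j z) + ext0 u z * sum3 (fun j => cf E j * cf z j) * / norm3 z)
           (g i) i z _ HU Hz (Hg i Hi) (phi_form E)).
  unfold sum3. dauto_with ltac:(atoms Hz). unfold GP, sum3. field. lra.
Qed.

Lemma h_phi E (g : nat -> R3 -> R) (h : nat -> nat -> R3 -> R) :
  (forall i, (i < 3)%nat -> is_partial (ext0 (phi_E E u Du)) i (g i) (cone U)) ->
  (forall i j, (i < 3)%nat -> (j < 3)%nat -> is_partial (g i) j (h i j) (cone U)) ->
  forall i k, (i < 3)%nat -> (k < 3)%nat -> forall x, U x ->
  h i k x = HP x (fun j => Du j x) (fun a b => D2u a b x) (fun a b c => D3u a b c x) (u x) E 1 i k.
Proof.
  intros Hg Hh i k Hi Hk x Hx.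
  pose proof (cone_unit U x HU Hx) as Hz.
  assert (Hn: norm3 x = 1) by (apply (proj1 HU); auto).
  apply (pd_eq U (g i) (GP E u Du D2u i) (h i k) k x _ HU Hz (Hh i k Hi Hk) (g_phi E g Hg i Hi)).
  unfold GP, sum3. dauto_with ltac:(atoms Hz). rewrite ext0_unit by auto. rewrite Hn.
  unfold HP, sum3. cbv zeta. field.
Qed.

End SL.

Lemma sum3_zero f : (forall i, (i < 3)%nat -> f i = 0) -> sum3 f = 0.
Proof. intros H. unfold sum3. rewrite !H by lia. ring. Qed.

Theorem lemma2 :
  forall (lam Lam K : R), 0 < lam -> lam <= Lam ->
  exists C1 C2 : R,
  forall (U : R3 -> Prop) (F : nat -> nat -> R3 -> R) (DF : nat -> nat -> nat -> R3 -> R)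
         (u : R3 -> R) (Du : nat -> R3 -> R) (D2u : nat -> nat -> R3 -> R)
         (D3u : nat -> nat -> nat -> R3 -> R),
    S2open U ->
    (forall x, U x -> forall a b, (a < 3)%nat -> (b < 3)%nat -> F a b x = F b a x) ->
    (forall x, U x -> forall a, (a < 3)%nat -> sum3 (fun b => F a b x * cf x b) = 0) ->
    (forall a b c, (a < 3)%nat -> (b < 3)%nat -> (c < 3)%nat ->
       is_partial (ext0 (F a b)) c (DF a b c) (cone U) /\
       cont3 (ext0 (F a b)) (cone U) /\ cont3 (DF a b c) (cone U)) ->
    (forall x, U x -> forall a b c, (a < 3)%nat -> (b < 3)%nat -> (c < 3)%nat ->
       Rabs (F a b x) <= K /\ Rabs (DF a b c x) <= K) ->
    (forall x xi, U x -> dot xi x = 0 ->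
       lam * dot xi xi <= quadF F x xi <= Lam * dot xi xi) ->
    (forall i j k, (i < 3)%nat -> (j < 3)%nat -> (k < 3)%nat ->
       is_partial (ext0 u) i (Du i) (cone U) /\
       is_partial (Du i) j (D2u i j) (cone U) /\
       is_partial (D2u i j) k (D3u i j k) (cone U) /\
       cont3 (ext0 u) (cone U) /\ cont3 (Du i) (cone U) /\
       cont3 (D2u i j) (cone U) /\ cont3 (D3u i j k) (cone U)) ->
    (forall x, U x -> contr F D2u x + u x * sum3 (fun a => F a a x) = 0) ->
    (forall (g : nat -> R3 -> R) (h : nat -> nat -> R3 -> R),
       (forall i, (i < 3)%nat -> is_partial (ext0 (rho_u u Du)) i (g i) (cone U)) ->
       (forall i j, (i < 3)%nat -> (j < 3)%nat -> is_partial (g i) j (h i j) (cone U)) ->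
       forall x, U x -> contr F h x >= - C1 * norm3 (grad g x)) /\
    (forall (E : R3), norm3 E = 1 ->
     forall (g : nat -> R3 -> R) (h : nat -> nat -> R3 -> R),
       (forall i, (i < 3)%nat -> is_partial (ext0 (phi_E E u Du)) i (g i) (cone U)) ->
       (forall i j, (i < 3)%nat -> (j < 3)%nat -> is_partial (g i) j (h i j) (cone U)) ->
       forall x, U x -> contr F h x >= - C2 * norm3 (grad g x)).
Proof.
  intros lam Lam K Hl HL.
  exists (27 * K * (3 + 3 * Lam / lam)), (27 * K * (3 + 3 * Lam / lam)).
  intros U F DF u Du D2u D3u HU HFs HFt HFreg HFb Hell Hureg Hpde.
  assert (Pu: forall i, (i < 3)%nat -> is_partial (ext0 u) i (Du i) (cone U))
    by (intros i Hi; apply (Hureg i 0%nat 0%nat); lia).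
  assert (P2: forall i j, (i < 3)%nat -> (j < 3)%nat -> is_partial (Du i) j (D2u i j) (cone U))
    by (intros i j Hi Hj; apply (Hureg i j 0%nat); lia).
  assert (P3: forall i j k, (i < 3)%nat -> (j < 3)%nat -> (k < 3)%nat -> is_partial (D2u i j) k (D3u i j k) (cone U))
    by (intros i j k Hi Hj Hk; apply (Hureg i j k); lia).
  assert (C1: forall i, (i < 3)%nat -> cont3 (Du i) (cone U))
    by (intros i Hi; apply (Hureg i 0%nat 0%nat); lia).
  assert (C2: forall i j, (i < 3)%nat -> (j < 3)%nat -> cont3 (D2u i j) (cone U))
    by (intros i j Hi Hj; apply (Hureg i j 0%nat); lia).
  assert (C3: forall i j k, (i < 3)%nat -> (j < 3)%nat -> (k < 3)%nat -> cont3 (D3u i j k) (cone U))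
    by (intros i j k Hi Hj Hk; apply (Hureg i j k); lia).
  assert (PF: forall a b c, (a < 3)%nat -> (b < 3)%nat -> (c < 3)%nat -> is_partial (ext0 (F a b)) c (DF a b c) (cone U))
    by (intros a b c Ha Hb Hc; apply (HFreg a b c); lia).
  assert (CF: forall a b c, (a < 3)%nat -> (b < 3)%nat -> (c < 3)%nat -> cont3 (DF a b c) (cone U))
    by (intros a b c Ha Hb Hc; apply (HFreg a b c); lia).
  assert (Facts: forall x, U x ->
    let p := fun j => Du j x in let Hm := fun a b => D2u a b x in let T := fun a b c => D3u a b c x in
    let Fm := fun a b => F a b x in let Dm := fun a b c => DF a b c x in
    (forall i j, (i < 3)%nat -> (j < 3)%nat -> Hm i j = Hm j i) /\
    (forall i j, (i < 3)%nat -> (j < 3)%nat -> Fm i j = Fm j i) /\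
    (forall a b c, (a < 3)%nat -> (b < 3)%nat -> (c < 3)%nat -> Dm a b c = Dm b a c) /\
    (forall i j k, (i < 3)%nat -> (j < 3)%nat -> (k < 3)%nat -> T i j k = T i k j) /\
    (forall i j k, (i < 3)%nat -> (j < 3)%nat -> (k < 3)%nat -> T i j k = T j i k) /\
    dot x x = 1 /\ sum3 (fun k => cf x k * p k) = 0 /\
    (forall b, (b < 3)%nat -> cHx x p Hm b = 0) /\
    (forall a, (a < 3)%nat -> cFx x Fm a = 0) /\
    (forall b j, (b < 3)%nat -> (j < 3)%nat -> cG x Fm Dm b j = 0) /\
    SFH Fm Hm + u x * trF Fm = 0 /\
    (forall c, (c < 3)%nat -> cPDE x p Hm T Fm Dm (u x) c = 0) /\
    (forall a b c, (a < 3)%nat -> (b < 3)%nat -> (c < 3)%nat -> sum3 (fun c => cf x c * Dm a b c) = 0)).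
  { intros x Hx. pose proof (cone_unit U x HU Hx) as Hy.
    assert (Hn: norm3 x = 1) by (apply (proj1 HU); auto).
    repeat split.
    - intros; eapply Hsym; eauto.
    - intros; apply HFs; auto.
    - intros; eapply DFsym; eauto.
    - intros; eapply Tsym1; eauto.
    - intros; eapply Tsym2; eauto.
    - rewrite dotN, Hn; ring.
    - eapply Eu1; eauto.
    - intros b Hb. unfold cHx. erewrite Eu2; eauto. ring.
    - intros a Ha. unfold cFx. apply HFt; auto.
    - intros b j Hb Hj. unfold cG. eapply F6; eauto.
    - unfold SFH, trF. apply (Hpde x Hx).
    - intros c Hc. eapply PDEc; eauto.
    - intros a b c Ha Hb Hc. eapply EF; eauto. }
  assert (Wfacts: forall x, U x ->
    let p := fun j => Du j x in let Hm := fun a b => D2u a b x in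
    let Fm := fun a b => F a b x in
    (forall a b, (a < 3)%nat -> (b < 3)%nat -> Wm x p Hm (u x) a b = Wm x p Hm (u x) b a) /\
    (forall a, (a < 3)%nat -> sum3 (fun b => Wm x p Hm (u x) a b * cf x b) = 0) /\
    sum3 (fun a => sum3 (fun b => Fm a b * Wm x p Hm (u x) a b)) = 0).
  { intros x Hx. pose proof (Facts x Hx) as Fx. cbv zeta in Fx |- *.
    destruct Fx as [HHs [HFs' [HDs [T1 [T2 [Cxx [Cxp [CHx [CFx [CG [P0 [PC HEF]]]]]]]]]]]].
    split; [|split].
    - intros a b Ha Hb. unfold Wm, delta. rewrite (HHs a b Ha Hb), Nat.eqb_sym. ring.
    - intros a Ha. pose proof (CHx a Ha) as Ca. unfold cHx in Ca.
      transitivity ((sum3 (fun k => cf x k * D2u a k x) + Du a x) + cf x a * sum3 (fun k => cf x k * Du k x)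
         + (Du a x - u x * cf x a) * (dot x x - 1)).
      + unfold Wm, delta, dot, sum3. dest3 a; cbn [Nat.eqb]; rewrite ?(HHs 0%nat 1%nat), ?(HHs 0%nat 2%nat),
          ?(HHs 1%nat 2%nat), ?(HHs 1%nat 0%nat), ?(HHs 2%nat 0%nat), ?(HHs 2%nat 1%nat) by lia; ring.
      + rewrite Ca, Cxp, Cxx. ring.
    - transitivity ((SFH (fun a b => F a b x) (fun a b => D2u a b x) + u x * trF (fun a b => F a b x))
         + 2 * sum3 (fun b => Du b x * cFx x (fun a b => F a b x) b)
         - u x * sum3 (fun a => cf x a * cFx x (fun a b => F a b x) a)).
      + unfold Wm, delta, SFH, trF, cFx, sum3. cbn [Nat.eqb].
        rewrite ?(HFs' 1%nat 0%nat), ?(HFs' 2%nat 0%nat), ?(HFs' 2%nat 1%nat) by lia. ring.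
      + rewrite P0. unfold sum3. rewrite !CFx by lia. ring. }
  split.
  - intros g h Hg Hh x Hx.
    pose proof (Facts x Hx) as Fx. cbv zeta in Fx.
    destruct Fx as [HHs [HFs' [HDs [T1 [T2 [Cxx [Cxp [CHx [CFx [CG [P0 [PC HEF]]]]]]]]]]]].
    pose proof (Wfacts x Hx) as Wx. cbv zeta in Wx. destruct Wx as [Ws [Wx Wtr]].
    assert (HH: forall i k, (i < 3)%nat -> (k < 3)%nat -> h i k x =
       HR x (fun j => Du j x) (fun a b => D2u a b x) (fun a b c => D3u a b c x) (u x) i k)
      by (intros; eapply h_rho; eauto).
    assert (E1: contr F h x = sum3 (fun i => sum3 (fun k => (fun a b => F a b x) i k *
       HR x (fun j => Du j x) (fun a b => D2u a b x) (fun a b c => D3u a b c x) (u x) i k)))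
      by (unfold contr, sum3; rewrite !HH by lia; reflexivity).
    rewrite E1, (rho_ident x _ _ _ _ (fun a b c => DF a b c x) _ HHs HFs' HDs T1 T2 Cxx Cxp CHx CFx CG P0 PC).
    assert (Gx: grad g x = mk3
       (2 * sum3 (fun b => Wm x (fun j => Du j x) (fun a b => D2u a b x) (u x) 0%nat b * cf (grad Du x) b))
       (2 * sum3 (fun b => Wm x (fun j => Du j x) (fun a b => D2u a b x) (u x) 1%nat b * cf (grad Du x) b))
       (2 * sum3 (fun b => Wm x (fun j => Du j x) (fun a b => D2u a b x) (u x) 2%nat b * cf (grad Du x) b))).
    { assert (Gi: forall i, (i < 3)%nat -> g i x =
          2 * sum3 (fun b => Wm x (fun j => Du j x) (fun a b => D2u a b x) (u x) i b * cf (grad Du x) b)).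
      { intros i Hi. rewrite (g_rho U u Du D2u HU Pu P2 C1 g Hg i Hi x (cone_unit U x HU Hx)).
        unfold GR. rewrite Cxx, ext0_unit by (apply (proj1 HU); auto).
        transitivity (2 * sum3 (fun b => Wm x (fun j => Du j x) (fun a b => D2u a b x) (u x) i b * cf (grad Du x) b)
          + 2 * (u x * cf x i - Du i x) * sum3 (fun k => cf x k * Du k x)).
        - unfold Wm, delta, grad, sum3. dest3 i; cbn [Nat.eqb ebase cf]; unfold mk3; cbn [fst snd];
          rewrite ?(HHs 1%nat 0%nat), ?(HHs 2%nat 0%nat), ?(HHs 2%nat 1%nat) by lia; ring.
        - rewrite Cxp. ring. }
      unfold grad at 1. rewrite (Gi 0%nat), (Gi 1%nat), (Gi 2%nat) by lia. reflexivity. }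
    rewrite Gx.
    apply (ineq lam Lam K x (grad Du x) _ (fun a b => F a b x) (fun a b c => DF a b c x) Hl HL Cxx).
    + exact Cxp.
    + exact Ws.
    + exact Wx.
    + exact HFs'.
    + intros xi Hxi. apply (Hell x xi Hx Hxi).
    + exact Wtr.
    + intros a b j Ha Hb Hj. apply (HFb x Hx a b j Ha Hb Hj).
  - intros E HE g h Hg Hh x Hx.
    pose proof (Facts x Hx) as Fx. cbv zeta in Fx.
    destruct Fx as [HHs [HFs' [HDs [T1 [T2 [Cxx [Cxp [CHx [CFx [CG [P0 [PC HEF]]]]]]]]]]]].
    pose proof (Wfacts x Hx) as Wx. cbv zeta in Wx. destruct Wx as [Ws [Wx Wtr]].
    assert (Hn: norm3 x = 1) by (apply (proj1 HU); auto).
    assert (HH: forall i k, (i < 3)%nat -> (k < 3)%nat -> h i k x =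
       HP x (fun j => Du j x) (fun a b => D2u a b x) (fun a b c => D3u a b c x) (u x) E 1 i k)
      by (intros i k Hi Hk; apply (h_phi U u Du D2u D3u HU Pu P2 P3 E g h Hg Hh i k Hi Hk x Hx)).
    assert (E1: contr F h x = sum3 (fun i => sum3 (fun k => (fun a b => F a b x) i k *
       HP x (fun j => Du j x) (fun a b => D2u a b x) (fun a b c => D3u a b c x) (u x) E 1 i k)))
      by (unfold contr, sum3; rewrite !HH by lia; reflexivity).
    rewrite E1, (phi_ident x _ _ _ _ (fun a b c => DF a b c x) _ E HHs HFs' HDs T1 T2 CFx CG P0 PC).
    set (e := vsub E (vscal (dot E x) x)).
    set (w := Wm x (fun j => Du j x) (fun a b => D2u a b x) (u x)) in *.
    assert (Gx: grad g x = mk3 (sum3 (fun b => w 0%nat b * cf e b)) (sum3 (fun b => w 1%nat b * cf e b))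
                               (sum3 (fun b => w 2%nat b * cf e b))).
    { assert (Gi: forall i, (i < 3)%nat -> g i x = sum3 (fun b => w i b * cf e b)).
      { intros i Hi. rewrite (g_phi U u Du D2u HU Pu P2 E g Hg i Hi x (cone_unit U x HU Hx)).
        unfold GP. rewrite Hn, Rinv_1, ext0_unit by auto.
        transitivity (sum3 (fun b => w i b * cf e b) + dot E x * sum3 (fun b => w i b * cf x b)).
        - unfold e, w, Wm, delta, dot, sum3. rewrite !cf_vsub, !cf_vscal.
          dest3 i; cbn [Nat.eqb ebase cf]; unfold mk3; cbn [fst snd];
          rewrite ?(HHs 1%nat 0%nat), ?(HHs 2%nat 0%nat), ?(HHs 2%nat 1%nat) by lia; ring.
        - rewrite (Wx i Hi). ring. }
      unfold grad at 1. rewrite (Gi 0%nat), (Gi 1%nat), (Gi 2%nat) by lia. reflexivity. }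
    rewrite Gx.
    assert (Hxe: dot x e = 0).
    { transitivity (dot x E - dot E x * dot x x).
      - unfold e, dot, sum3. rewrite !cf_vsub, !cf_vscal. ring.
      - rewrite Cxx. unfold dot, sum3. ring. }
    pose proof (ineq_core lam Lam K x e w (fun a b => F a b x) (fun a b c => DF a b c x) Hl HL Cxx Hxe
       Ws Wx HFs' (fun xi Hxi => Hell x xi Hx Hxi) Wtr (fun a b j Ha Hb Hj => proj2 (HFb x Hx a b j Ha Hb Hj))) as IC.
    assert (Z: sum3 (fun j => cf E j * sum3 (fun a => sum3 (fun b => DF a b j x * w a b)))
             = sum3 (fun j => cf e j * sum3 (fun a => sum3 (fun b => DF a b j x * w a b)))).
    { assert (Z0: sum3 (fun a => sum3 (fun b => w a b * sum3 (fun c => cf x c * DF a b c x))) = 0).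
      { cbv beta in HEF. apply sum3_zero; intros a Ha; apply sum3_zero; intros b Hb.
        rewrite (HEF a b 0%nat Ha Hb ltac:(lia)). ring. }
      transitivity (sum3 (fun j => cf e j * sum3 (fun a => sum3 (fun b => DF a b j x * w a b)))
                    + dot E x * sum3 (fun a => sum3 (fun b => w a b * sum3 (fun c => cf x c * DF a b c x)))).
      - unfold e, dot, sum3. rewrite !cf_vsub, !cf_vscal. ring.
      - rewrite Z0. ring. }
    cbv beta in *. rewrite Z. apply abs_le_inv in IC. lra.
Qed.
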